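(* Let $(X,\sigma)$ be a mixing one-sided or two-sided synchronizing subshift, let $z,z'\in X$ be distinct and let $\delta>0$. Then there is a dense Mycielski set $S\subset X$ which is syndetically scrambled for $\sigma$ and such that: (i) $\sigma^k(S)\subset S$ for some $k\in\mathbb N$; (ii) for any two distinct $x,x'\in S$ there is an infinite set $M\subset\mathbb N$ with $d(z,\sigma^n(x))<\delta$ and $d(z',\sigma^n(x'))<\delta$ for all $n\in M$.
   Context: Subshift $X\subset\mathcal A^{\mathbb N_0}$ or $\mathcal A^{\mathbb Z}$ over a finite alphabet, with metric $d(x,y)=2^{-k}$ where $k$ is maximal with $x_{[0,k)}=y_{[0,k)}$ (resp. $x_{(-k,k)}=y_{(-k,k)}$). $L(X)$ is the set of finite words appearing in points of $X$. A nonempty word $s\in L(X)$ is synchronizing if $us,sv\in L(X)$ imply $usv\in L(X)$; a synchronizing subshift is a transitive subshift with a synchronizing word. Mixing: $\{n:\sigma^n(U)\cap V\ne\emptyset\}$ cofinite for all nonempty open $U,V$. Syndetic: a subset of $\mathbb N$ meeting every set containing arbitrarily long runs of consecutive integers. $\mathrm{Asy}$, $\mathrm{SProx}$: pairs with $d(\sigma^nx,\sigma^ny)\to0$, resp. with $\{n:d(\sigma^nx,\sigma^ny)<\varepsilon\}$ syndetic for every $\varepsilon>0$. Syndetically scrambled set: at least two points, all distinct pairs in $\mathrm{SProx}\setminus\mathrm{Asy}$. Mycielski set: countable union of Cantor sets. *)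

(* Defs.v *)
From Stdlib Require Import Reals List ZArith ClassicalEpsilon.
Import ListNotations.
Open Scope R_scope.

Definition open_in {T : Type} (d : T -> T -> R) (X U : T -> Prop) : Prop :=
  (forall x, U x -> X x) /\
  (forall x, U x -> exists e, e > 0 /\ forall y, X y -> d x y < e -> U y).

Definition closed_set {T : Type} (d : T -> T -> R) (X : T -> Prop) : Prop :=
  forall x, (forall e, e > 0 -> exists y, X y /\ d x y < e) -> X x.

Definition nonempty {T : Type} (U : T -> Prop) : Prop := exists x, U x.

Definition hits {T : Type} (f : T -> T) (U V : T -> Prop) (n : nat) : Prop :=
  exists x, U x /\ V (Nat.iter n f x).

Definition transitive {T : Type} (d : T -> T -> R) (f : T -> T) (X : T -> Prop) : Prop :=
  forall U V, open_in d X U -> open_in d X V -> nonempty U -> nonempty V ->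
    exists n, hits f U V n.

Definition mixing {T : Type} (d : T -> T -> R) (f : T -> T) (X : T -> Prop) : Prop :=
  forall U V, open_in d X U -> open_in d X V -> nonempty U -> nonempty V ->
    exists N, forall n, (N <= n)%nat -> hits f U V n.

Definition thick (B : nat -> Prop) : Prop :=
  forall L : nat, exists m, forall j, (j < L)%nat -> B (m + j)%nat.

Definition syndetic (A : nat -> Prop) : Prop :=
  forall B, thick B -> exists n, A n /\ B n.

Definition infinite_nat (M : nat -> Prop) : Prop :=
  forall N, exists n, (N <= n)%nat /\ M n.

Definition asymptotic {T : Type} (d : T -> T -> R) (f : T -> T) (x y : T) : Prop :=
  forall e, e > 0 -> exists N, forall n, (N <= n)%nat ->
    d (Nat.iter n f x) (Nat.iter n f y) < e.

Definition synd_proximal {T : Type} (d : T -> T -> R) (f : T -> T) (x y : T) : Prop :=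
  forall e, e > 0 -> syndetic (fun n => d (Nat.iter n f x) (Nat.iter n f y) < e).

Definition synd_scrambled {T : Type} (d : T -> T -> R) (f : T -> T) (S : T -> Prop) : Prop :=
  (exists x y, S x /\ S y /\ x <> y) /\
  (forall x y, S x -> S y -> x <> y -> synd_proximal d f x y /\ ~ asymptotic d f x y).

Definition agree_cantor (k : nat) (p q : nat -> bool) : Prop :=
  forall i, (i < k)%nat -> p i = q i.

(* C is homeomorphic (via h) to the Cantor space {0,1}^N with the product topology *)
Definition cantor_set {T : Type} (d : T -> T -> R) (C : T -> Prop) : Prop :=
  exists h : (nat -> bool) -> T,
    (forall p q, h p = h q -> p = q) /\
    (forall x, C x <-> exists p, h p = x) /\
    (forall p e, e > 0 -> exists N, forall q, agree_cantor N p q -> d (h p) (h q) < e) /\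
    (forall p N, exists e, e > 0 /\ forall q, d (h p) (h q) < e -> agree_cantor N p q).

Definition mycielski {T : Type} (d : T -> T -> R) (S : T -> Prop) : Prop :=
  exists Cs : nat -> T -> Prop,
    (forall n, cantor_set d (Cs n)) /\ (forall x, S x <-> exists n, Cs n x).

Definition dense_in {T : Type} (d : T -> T -> R) (X S : T -> Prop) : Prop :=
  (forall x, S x -> X x) /\
  (forall x, X x -> forall e, e > 0 -> exists y, S y /\ d x y < e).

Definition finite_type (A : Type) : Prop := exists l : list A, forall a : A, In a l.

Definition sync_word {A : Type} (lang : list A -> Prop) (s : list A) : Prop :=
  s <> [] /\ lang s /\
  forall u v, lang (u ++ s) -> lang (s ++ v) -> lang (u ++ s ++ v).

Definition shift1 {A : Type} (x : nat -> A) : nat -> A := fun i => x (S i).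

(* d(x,y) = 2^{-k}, k maximal with x_[0,k) = y_[0,k); d(x,x) = 0 *)
Definition dist1 {A : Type} (x y : nat -> A) : R :=
  epsilon (inhabits 0%R) (fun r =>
    ((forall i, x i = y i) /\ r = 0) \/
    (exists k : nat, (forall i, (i < k)%nat -> x i = y i) /\ x k <> y k /\ r = (/2) ^ k)).

Definition occurs1 {A : Type} (w : list A) (x : nat -> A) (i : nat) : Prop :=
  forall j a, nth_error w j = Some a -> x (i + j)%nat = a.

Definition lang1 {A : Type} (X : (nat -> A) -> Prop) (w : list A) : Prop :=
  exists x i, X x /\ occurs1 w x i.

Definition subshift1 {A : Type} (X : (nat -> A) -> Prop) : Prop :=
  closed_set dist1 X /\ (forall x, X x -> X (shift1 x)).

Definition synchronizing1 {A : Type} (X : (nat -> A) -> Prop) : Prop :=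
  subshift1 X /\ transitive dist1 shift1 X /\ exists s, sync_word (lang1 X) s.

Definition shift2 {A : Type} (x : Z -> A) : Z -> A := fun i => x (i + 1)%Z.

(* d(x,y) = 2^{-k}, k maximal with x_(-k,k) = y_(-k,k); d(x,x) = 0 *)
Definition dist2 {A : Type} (x y : Z -> A) : R :=
  epsilon (inhabits 0%R) (fun r =>
    ((forall i, x i = y i) /\ r = 0) \/
    (exists k : nat, (forall i, (Z.abs i < Z.of_nat k)%Z -> x i = y i) /\
       (x (Z.of_nat k) <> y (Z.of_nat k) \/ x (- Z.of_nat k)%Z <> y (- Z.of_nat k)%Z) /\
       r = (/2) ^ k)).

Definition occurs2 {A : Type} (w : list A) (x : Z -> A) (i : Z) : Prop :=
  forall j a, nth_error w j = Some a -> x (i + Z.of_nat j)%Z = a.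

Definition lang2 {A : Type} (X : (Z -> A) -> Prop) (w : list A) : Prop :=
  exists x i, X x /\ occurs2 w x i.

(* closed and sigma(X) = X *)
Definition subshift2 {A : Type} (X : (Z -> A) -> Prop) : Prop :=
  closed_set dist2 X /\
  (forall x, X x -> X (shift2 x) /\ X (fun i => x (i - 1)%Z)).

Definition synchronizing2 {A : Type} (X : (Z -> A) -> Prop) : Prop :=
  subshift2 X /\ transitive dist2 shift2 X /\ exists s, sync_word (lang2 X) s.

(* Main.v *)
Require Import Defs.
From Stdlib Require Import Reals List ZArith.
From Stdlib Require Import Lia Lra Bool Classical ClassicalEpsilon Cantor FunctionalExtensionality.
Import ListNotations.
Open Scope R_scope.

Lemma least_ex (Q : nat -> Prop) : (exists i, Q i) -> exists i, Q i /\ forall j, (j < i)%nat -> ~ Q j.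
Proof.
  intros [i Hi]. revert Hi. pattern i. apply (well_founded_ind lt_wf). clear i.
  intros i IH Hi. destruct (classic (exists j, (j < i)%nat /\ Q j)) as [[j [Hj1 Hj2]]|Hn].
  - exact (IH j Hj1 Hj2).
  - exists i. split; auto. intros j Hj HQ. apply Hn. eauto.
Qed.

Lemma half_pow_pos (n : nat) : 0 < (/2)^n.
Proof. apply pow_lt; lra. Qed.

Lemma half_pow_le (m n : nat) : (m <= n)%nat -> (/2)^n <= (/2)^m.
Proof.
  intro H. induction H. lra.
  simpl. pose proof (half_pow_pos m0). lra.
Qed.

Lemma half_pow_small (e : R) : e > 0 -> exists m, (/2)^m < e.
Proof.
  intro He. destruct (pow_lt_1_zero (/2)) with (y := e) as [N HN].
  rewrite Rabs_right; lra. lra.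
  exists N. specialize (HN N (le_n N)). rewrite Rabs_right in HN; auto.
  left. apply half_pow_pos.
Qed.

Lemma dist1_spec {A : Type} (x y : nat -> A) :
  ((forall i, x i = y i) /\ dist1 x y = 0) \/
  (exists k : nat, (forall i, (i < k)%nat -> x i = y i) /\ x k <> y k /\ dist1 x y = (/2) ^ k).
Proof.
  unfold dist1. apply epsilon_spec.
  destruct (classic (forall i, x i = y i)) as [H|H].
  - exists 0. left. auto.
  - apply not_all_ex_not in H. apply least_ex in H as [k [Hk1 Hk2]].
    exists ((/2)^k). right. exists k. repeat split; auto.
    intros i Hi. apply NNPP. auto.
Qed.

Lemma dist1_le {A : Type} (x y : nat -> A) (m : nat) :
  (forall i, (i < m)%nat -> x i = y i) -> dist1 x y <= (/2)^m.
Proof.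
  intro H. destruct (dist1_spec x y) as [[_ E]|[k [H1 [H2 E]]]]; rewrite E.
  - left. apply half_pow_pos.
  - apply half_pow_le. destruct (Nat.lt_ge_cases k m); auto. exfalso. auto.
Qed.

Lemma dist1_lt {A : Type} (x y : nat -> A) (m : nat) :
  dist1 x y < (/2)^m -> forall i, (i <= m)%nat -> x i = y i.
Proof.
  intros H i Hi. destruct (dist1_spec x y) as [[E _]|[k [H1 [H2 E]]]]; auto.
  rewrite E in H. apply H1. destruct (Nat.lt_ge_cases m k). lia.
  pose proof (half_pow_le k m H0). lra.
Qed.

Lemma dist2_spec {A : Type} (x y : Z -> A) :
  ((forall i, x i = y i) /\ dist2 x y = 0) \/
  (exists k : nat, (forall i, (Z.abs i < Z.of_nat k)%Z -> x i = y i) /\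
       (x (Z.of_nat k) <> y (Z.of_nat k) \/ x (- Z.of_nat k)%Z <> y (- Z.of_nat k)%Z) /\
       dist2 x y = (/2) ^ k).
Proof.
  unfold dist2. apply epsilon_spec.
  destruct (classic (forall i, x i = y i)) as [H|H].
  - exists 0. left. auto.
  - assert (exists k : nat, x (Z.of_nat k) <> y (Z.of_nat k) \/ x (- Z.of_nat k)%Z <> y (- Z.of_nat k)%Z) as H'.
    { apply not_all_ex_not in H as [i Hi]. exists (Z.abs_nat i).
      destruct (Z.abs_spec i) as [[? ?]|[? ?]].
      - left. rewrite Nat2Z.inj_abs_nat. rewrite Z.abs_eq by lia. auto.
      - right. rewrite Nat2Z.inj_abs_nat. rewrite Z.abs_neq by lia. rewrite Z.opp_involutive. auto. }
    apply least_ex in H' as [k [Hk1 Hk2]].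
    exists ((/2)^k). right. exists k. repeat split; auto.
    intros i Hi. apply NNPP. intro Hne. apply (Hk2 (Z.abs_nat i)). lia.
    destruct (Z.abs_spec i) as [[? ?]|[? ?]].
      + left. rewrite Nat2Z.inj_abs_nat. rewrite Z.abs_eq by lia. auto.
      + right. rewrite Nat2Z.inj_abs_nat. rewrite Z.abs_neq by lia. rewrite Z.opp_involutive. auto.
Qed.

Lemma dist2_le {A : Type} (x y : Z -> A) (m : nat) :
  (forall i, (Z.abs i < Z.of_nat m)%Z -> x i = y i) -> dist2 x y <= (/2)^m.
Proof.
  intro H. destruct (dist2_spec x y) as [[_ E]|[k [H1 [H2 E]]]]; rewrite E.
  - left. apply half_pow_pos.
  - apply half_pow_le. destruct (Nat.lt_ge_cases k m); auto. exfalso.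
    destruct H2 as [H2|H2]; apply H2; apply H; lia.
Qed.

Lemma dist2_lt {A : Type} (x y : Z -> A) (m : nat) :
  dist2 x y < (/2)^m -> forall i, (Z.abs i <= Z.of_nat m)%Z -> x i = y i.
Proof.
  intros H i Hi. destruct (dist2_spec x y) as [[E _]|[k [H1 [H2 E]]]]; auto.
  rewrite E in H. apply H1. destruct (Nat.lt_ge_cases m k). lia.
  pose proof (half_pow_le k m H0). lra.
Qed.


Definition occw {A : Type} (w W : list A) (o : nat) : Prop :=
  forall j a, nth_error w j = Some a -> nth_error W (o + j) = Some a.

Definition factor_closed {A : Type} (L : list A -> Prop) : Prop :=
  forall u w v, L (u ++ w ++ v) -> L w.

Definition mixL {A : Type} (L : list A -> Prop) : Prop :=
  forall u v, L u -> L v -> exists N, forall n, (N <= n)%nat -> (length u <= n)%nat ->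
    exists W, L W /\ occw u W 0 /\ occw v W n /\ length W = (n + length v)%nat.

Lemma sync_concat {A : Type} (L : list A -> Prop) (s : list A) :
  sync_word L s -> forall ts T0, L (T0 ++ s) ->
  (forall t, In t ts -> exists v, t = s ++ v /\ L (t ++ s)) ->
  L (T0 ++ concat ts ++ s).
Proof.
  intros [_ [_ Hs]] ts. induction ts as [|t ts IH]; intros T0 H0 Ht; simpl; auto.
  destruct (Ht t (or_introl eq_refl)) as [v [-> Hv]].
  replace (T0 ++ ((s ++ v) ++ concat ts) ++ s) with ((T0 ++ s ++ v) ++ concat ts ++ s)
    by (rewrite <- !app_assoc; reflexivity).
  apply IH.
  - rewrite <- !app_assoc. apply Hs; auto. rewrite <- app_assoc in Hv. auto.
  - intros t' Ht'. apply Ht. right. auto.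
Qed.

Lemma occw_nth {A : Type} (w W : list A) o j a : occw w W o -> nth_error w j = Some a -> nth_error W (o + j) = Some a.
Proof. intros H H'. apply H; auto. Qed.

Lemma nth_error_firstn_lt {A : Type} (l : list A) n i : (i < n)%nat -> nth_error (firstn n l) i = nth_error l i.
Proof. intro H. rewrite nth_error_firstn. destruct (Nat.ltb_spec i n); auto; lia. Qed.

Lemma occw_firstn {A : Type} (w W : list A) o n : occw w W o -> (o + length w <= n)%nat -> occw w (firstn n W) o.
Proof.
  intros H Hn j a Hj. assert (j < length w)%nat by (apply nth_error_Some; congruence).
  rewrite nth_error_firstn_lt by lia. auto.
Qed.

Lemma tile_exists {A : Type} (L : list A -> Prop) (s u w : list A) :
  factor_closed L -> mixL L -> L s -> L u -> L w ->
  exists No, forall o, (No <= o)%nat -> exists Nk, forall k, (Nk <= k)%nat ->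
    exists T, length T = k /\ occw u T 0 /\ occw w T o /\ L (T ++ s).
Proof.
  intros Hf Hm Hs Hu Hw.
  destruct (Hm u w Hu Hw) as [N1 HN1].
  exists (N1 + length u)%nat. intros o Ho.
  destruct (HN1 o ltac:(lia) ltac:(lia)) as [V [HV [HV1 [HV2 HV3]]]].
  destruct (Hm V s HV Hs) as [N2 HN2].
  exists (N2 + length V)%nat. intros k Hk.
  destruct (HN2 k ltac:(lia) ltac:(lia)) as [W [HW [HW1 [HW2 HW3]]]].
  exists (firstn k W). split; [|split; [|split]].
  - rewrite length_firstn. lia.
  - intros j a Hj. rewrite nth_error_firstn_lt.
    + apply HW1. simpl. apply HV1. auto.
    + assert (j < length u)%nat by (apply nth_error_Some; congruence). lia.
  - intros j a Hj. assert (j < length w)%nat by (apply nth_error_Some; congruence).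
    rewrite nth_error_firstn_lt by lia. apply HW1. apply HV2. auto.
  - replace W with (firstn k W ++ s) in HW; auto.
    rewrite <- (firstn_skipn k W) at 2. f_equal.
    apply nth_error_ext. intros i.
    destruct (Nat.lt_ge_cases i (length s)).
    + rewrite nth_error_skipn.
      destruct (nth_error s i) eqn:E.
      * apply HW2 in E. rewrite E. auto.
      * apply nth_error_None in E. lia.
    + rewrite (proj2 (nth_error_None s i)) by lia.
      symmetry. apply nth_error_None. rewrite length_skipn. lia.
Qed.


Definition wseg1 {A : Type} (x : nat -> A) (a len : nat) : list A :=
  map (fun i => x (a + i)%nat) (seq 0 len).

Lemma wseg1_nth {A : Type} (x : nat -> A) a len j :
  nth_error (wseg1 x a len) j = if (j <? len)%nat then Some (x (a + j)%nat) else None.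
Proof.
  unfold wseg1. rewrite nth_error_map. destruct (Nat.ltb_spec j len).
  - rewrite nth_error_seq. destruct (Nat.ltb_spec j len); try lia. reflexivity.
  - rewrite (proj2 (nth_error_None (seq 0 len) j)); auto. rewrite length_seq. lia.
Qed.

Lemma wseg1_length {A : Type} (x : nat -> A) a len : length (wseg1 x a len) = len.
Proof. unfold wseg1. rewrite length_map, length_seq. auto. Qed.

Lemma iter_shift1 {A : Type} (n : nat) (x : nat -> A) : Nat.iter n shift1 x = fun i => x (n + i)%nat.
Proof.
  induction n; simpl. reflexivity. rewrite IHn. unfold shift1. apply functional_extensionality.
  intro i. f_equal. lia.
Qed.

Lemma occurs1_wseg {A : Type} (x : nat -> A) a len : occurs1 (wseg1 x a len) x a.
Proof.
  intros j b H. rewrite wseg1_nth in H. destruct (Nat.ltb_spec j len); congruence.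
Qed.

Lemma subshift1_iter {A : Type} (X : (nat -> A) -> Prop) n x : subshift1 X -> X x -> X (Nat.iter n shift1 x).
Proof. intros [_ H] Hx. induction n; simpl; auto. Qed.

Lemma lang1_point {A : Type} (X : (nat -> A) -> Prop) w :
  subshift1 X -> lang1 X w -> exists y, X y /\ occurs1 w y 0.
Proof.
  intros HS [x [i [Hx Hw]]]. exists (Nat.iter i shift1 x). split.
  apply subshift1_iter; auto. rewrite iter_shift1. intros j a Hj. simpl. apply Hw; auto.
Qed.

Lemma lang1_wseg {A : Type} (X : (nat -> A) -> Prop) x a len : X x -> lang1 X (wseg1 x a len).
Proof. intros Hx. exists x, a. split; auto. apply occurs1_wseg. Qed.

Lemma lang1_factor {A : Type} (X : (nat -> A) -> Prop) : factor_closed (lang1 X).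
Proof.
  intros u w v [x [i [Hx Hw]]]. exists x, (i + length u)%nat. split; auto.
  intros j a Hj. rewrite <- Nat.add_assoc. apply Hw.
  rewrite nth_error_app2 by lia. replace (length u + j - length u)%nat with j by lia.
  rewrite nth_error_app1; auto. apply nth_error_Some. congruence.
Qed.

Lemma occurs1_occw {A : Type} (u : list A) y n : occurs1 u y 0 -> (length u <= n)%nat -> occw u (wseg1 y 0 n) 0.
Proof.
  intros H Hn j a Hj. simpl. rewrite wseg1_nth.
  assert (j < length u)%nat by (apply nth_error_Some; congruence).
  destruct (Nat.ltb_spec j n); try lia. pose proof (H j a Hj) as E. simpl in *. rewrite E. auto.
Qed.

Lemma cyl1_open {A : Type} (X : (nat -> A) -> Prop) w :
  open_in dist1 X (fun y => X y /\ occurs1 w y 0).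
Proof.
  split. intros x [Hx _]; auto.
  intros x [Hx Hw]. exists ((/2)^(length w))%R. split. apply half_pow_pos.
  intros y Hy Hd. split; auto. intros j a Hj. pose proof (dist1_lt x y _ Hd j) as E.
  assert (j < length w)%nat by (apply nth_error_Some; congruence).
  simpl. rewrite <- E by lia. apply (Hw j a Hj).
Qed.

Lemma mix1 {A : Type} (X : (nat -> A) -> Prop) :
  subshift1 X -> mixing dist1 shift1 X -> mixL (lang1 X).
Proof.
  intros HS Hm u v Hu Hv.
  destruct (lang1_point X u HS Hu) as [yu [Hyu Hyu']].
  destruct (lang1_point X v HS Hv) as [yv [Hyv Hyv']].
  destruct (Hm _ _ (cyl1_open X u) (cyl1_open X v)) as [N HN].
  exists yu; auto. exists yv; auto.
  exists N. intros n Hn Hun. destruct (HN n Hn) as [x [[Hx Hxu] [_ Hxv]]].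
  rewrite iter_shift1 in Hxv.
  exists (wseg1 x 0 (n + length v)). split; [apply lang1_wseg; auto|split;[|split]].
  - apply occurs1_occw; auto. lia.
  - intros j a Hj. rewrite wseg1_nth.
    assert (j < length v)%nat by (apply nth_error_Some; congruence).
    destruct (Nat.ltb_spec (n + j) (n + length v)); try lia. pose proof (Hxv j a Hj) as E. simpl in *. rewrite E. auto.
  - apply wseg1_length.
Qed.

Lemma closed1_pts {A : Type} (X : (nat -> A) -> Prop) x :
  subshift1 X -> (forall m, exists y, X y /\ forall i, (i < m)%nat -> x i = y i) -> X x.
Proof.
  intros [Hc _] H. apply Hc. intros e He. destruct (half_pow_small e He) as [m Hm].
  destruct (H m) as [y [Hy Hxy]]. exists y. split; auto.
  pose proof (dist1_le x y m Hxy). lra.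
Qed.


Definition wsegZ {A : Type} (x : Z -> A) (a : Z) (len : nat) : list A :=
  map (fun i => x (a + Z.of_nat i)%Z) (seq 0 len).

Lemma wsegZ_nth {A : Type} (x : Z -> A) a len j :
  nth_error (wsegZ x a len) j = if (j <? len)%nat then Some (x (a + Z.of_nat j)%Z) else None.
Proof.
  unfold wsegZ. rewrite nth_error_map. destruct (Nat.ltb_spec j len).
  - rewrite nth_error_seq. destruct (Nat.ltb_spec j len); try lia. reflexivity.
  - rewrite (proj2 (nth_error_None (seq 0 len) j)); auto. rewrite length_seq. lia.
Qed.

Lemma wsegZ_length {A : Type} (x : Z -> A) a len : length (wsegZ x a len) = len.
Proof. unfold wsegZ. rewrite length_map, length_seq. auto. Qed.

Lemma iter_shift2 {A : Type} (n : nat) (x : Z -> A) : Nat.iter n shift2 x = fun i => x (i + Z.of_nat n)%Z.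
Proof.
  induction n; simpl. apply functional_extensionality. intro i. f_equal. lia.
  rewrite IHn. unfold shift2. apply functional_extensionality.
  intro i. f_equal. lia.
Qed.

Lemma occurs2_wseg {A : Type} (x : Z -> A) a len : occurs2 (wsegZ x a len) x a.
Proof.
  intros j b H. rewrite wsegZ_nth in H. destruct (Nat.ltb_spec j len); congruence.
Qed.

Lemma subshift2_transl {A : Type} (X : (Z -> A) -> Prop) x c : subshift2 X -> X x -> X (fun i => x (i + c)%Z).
Proof.
  intros [_ H] Hx.
  assert (forall n : nat, X (fun i => x (i + Z.of_nat n)%Z) /\ X (fun i => x (i - Z.of_nat n)%Z)) as Hn.
  { induction n.
    - simpl. split.
      + replace (fun i => x (i + 0)%Z) with x; auto. apply functional_extensionality; intro i; f_equal; lia.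
      + replace (fun i => x (i - 0)%Z) with x; auto. apply functional_extensionality; intro i; f_equal; lia.
    - destruct IHn as [H1 H2]. split.
      + destruct (H _ H1) as [H3 _]. unfold shift2 in H3.
        replace (fun i => x (i + Z.of_nat (S n))%Z) with (fun i => x (i + 1 + Z.of_nat n)%Z); auto.
        apply functional_extensionality; intro i; f_equal; lia.
      + destruct (H _ H2) as [_ H3].
        replace (fun i => x (i - Z.of_nat (S n))%Z) with (fun i => x (i - 1 - Z.of_nat n)%Z); auto.
        apply functional_extensionality; intro i; f_equal; lia. }
  destruct (Z_le_gt_dec 0 c).
  - replace c with (Z.of_nat (Z.to_nat c)) by lia. apply Hn.
  - replace (fun i => x (i + c)%Z) with (fun i => x (i - Z.of_nat (Z.to_nat (- c)))%Z). apply Hn.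
    apply functional_extensionality; intro i; f_equal; lia.
Qed.

Lemma lang2_point {A : Type} (X : (Z -> A) -> Prop) w a :
  subshift2 X -> lang2 X w -> exists y, X y /\ occurs2 w y a.
Proof.
  intros HS [x [i [Hx Hw]]]. exists (fun p => x (p + (i - a))%Z). split.
  apply subshift2_transl; auto. intros j b Hj. rewrite <- (Hw j b Hj). f_equal. lia.
Qed.

Lemma lang2_wseg {A : Type} (X : (Z -> A) -> Prop) x a len : X x -> lang2 X (wsegZ x a len).
Proof. intros Hx. exists x, a. split; auto. apply occurs2_wseg. Qed.

Lemma lang2_factor {A : Type} (X : (Z -> A) -> Prop) : factor_closed (lang2 X).
Proof.
  intros u w v [x [i [Hx Hw]]]. exists x, (i + Z.of_nat (length u))%Z. split; auto.
  intros j a Hj. rewrite <- Z.add_assoc, <- Nat2Z.inj_add. apply Hw.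
  rewrite nth_error_app2 by lia. replace (length u + j - length u)%nat with j by lia.
  rewrite nth_error_app1; auto. apply nth_error_Some. congruence.
Qed.

Lemma occurs2_occw {A : Type} (u : list A) y n : occurs2 u y 0 -> (length u <= n)%nat -> occw u (wsegZ y 0 n) 0.
Proof.
  intros H Hn j a Hj. simpl. rewrite wsegZ_nth.
  assert (j < length u)%nat by (apply nth_error_Some; congruence).
  destruct (Nat.ltb_spec j n); try lia. pose proof (H j a Hj) as E. simpl in *. rewrite E. auto.
Qed.

Lemma cyl2_open {A : Type} (X : (Z -> A) -> Prop) w :
  open_in dist2 X (fun y => X y /\ occurs2 w y 0).
Proof.
  split. intros x [Hx _]; auto.
  intros x [Hx Hw]. exists ((/2)^(length w))%R. split. apply half_pow_pos.
  intros y Hy Hd. split; auto. intros j a Hj. pose proof (dist2_lt x y _ Hd (Z.of_nat j)) as E.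
  assert (j < length w)%nat by (apply nth_error_Some; congruence).
  simpl. rewrite <- E by lia. apply (Hw j a Hj).
Qed.

Lemma mix2 {A : Type} (X : (Z -> A) -> Prop) :
  subshift2 X -> mixing dist2 shift2 X -> mixL (lang2 X).
Proof.
  intros HS Hm u v Hu Hv.
  destruct (lang2_point X u 0 HS Hu) as [yu [Hyu Hyu']].
  destruct (lang2_point X v 0 HS Hv) as [yv [Hyv Hyv']].
  destruct (Hm _ _ (cyl2_open X u) (cyl2_open X v)) as [N HN].
  exists yu; auto. exists yv; auto.
  exists N. intros n Hn Hun. destruct (HN n Hn) as [x [[Hx Hxu] [_ Hxv]]].
  rewrite iter_shift2 in Hxv.
  exists (wsegZ x 0 (n + length v)). split; [apply lang2_wseg; auto|split;[|split]].
  - apply occurs2_occw; auto. lia.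
  - intros j a Hj. rewrite wsegZ_nth.
    assert (j < length v)%nat by (apply nth_error_Some; congruence).
    destruct (Nat.ltb_spec (n + j) (n + length v)); try lia. pose proof (Hxv j a Hj) as E.
    simpl in *. rewrite <- E. f_equal. f_equal. lia.
  - apply wsegZ_length.
Qed.

Lemma closed2_pts {A : Type} (X : (Z -> A) -> Prop) x :
  subshift2 X -> (forall m, exists y, X y /\ forall i, (Z.abs i < Z.of_nat m)%Z -> x i = y i) -> X x.
Proof.
  intros [Hc _] H. apply Hc. intros e He. destruct (half_pow_small e He) as [m Hm].
  destruct (H m) as [y [Hy Hxy]]. exists y. split; auto.
  pose proof (dist2_le x y m Hxy). lra.
Qed.


Inductive kind := KPair (e : Z) | KBit (i : nat) (ty : bool).

Definition code (a : nat) : kind :=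
  if Nat.even a then KBit (Nat.div2 (Nat.div2 a)) (Nat.odd (Nat.div2 a))
  else let b := Nat.div2 a in
       KPair (if Nat.even b then (Z.of_nat (Nat.div2 b) + 1)%Z else (- (Z.of_nat (Nat.div2 b) + 1))%Z).

Lemma code_bit i ty : exists a, code a = KBit i ty.
Proof.
  exists (2 * (2 * i + Nat.b2n ty))%nat. unfold code. rewrite Nat.even_even, Nat.div2_double.
  destruct ty; simpl Nat.b2n.
  - rewrite Nat.div2_odd', Nat.odd_odd. reflexivity.
  - rewrite Nat.add_0_r, Nat.div2_double, Nat.odd_even. reflexivity.
Qed.

Lemma code_pair e : e <> 0%Z -> exists a, code a = KPair e.
Proof.
  intro He. destruct (Z_le_gt_dec 0 e).
  - exists (2 * (2 * (Z.to_nat e - 1)) + 1)%nat. unfold code. rewrite Nat.even_odd, Nat.div2_odd'.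
    rewrite Nat.even_even, Nat.div2_double. f_equal. lia.
  - exists (2 * (2 * (Z.to_nat (- e) - 1) + 1) + 1)%nat. unfold code. rewrite Nat.even_odd, Nat.div2_odd'.
    rewrite Nat.even_odd, Nat.div2_odd'. f_equal. lia.
Qed.

Lemma code_bit_le a i ty : code a = KBit i ty -> (i <= a)%nat.
Proof.
  unfold code. destruct (Nat.even a); intro H; inversion H.
  pose proof (Nat.le_div2_diag_l a). pose proof (Nat.le_div2_diag_l (Nat.div2 a)). lia.
Qed.

Lemma code_pair_bound a e : code a = KPair e -> e <> 0%Z /\ (Z.abs e <= Z.of_nat a + 1)%Z.
Proof.
  unfold code. pose proof (Nat.le_div2_diag_l a). pose proof (Nat.le_div2_diag_l (Nat.div2 a)).
  destruct (Nat.even a); intro HH; try discriminate.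
  set (b := Nat.div2 a) in *. set (d := Nat.div2 b) in *. clearbody d.
  destruct (Nat.even b); inversion HH; clearbody b; subst; clear HH; lia.
Qed.

Definition kindq (q : nat) : kind := code (fst (of_nat q)).

Lemma fst_of_nat_le q : (fst (of_nat q) <= q)%nat.
Proof.
  rewrite <- (cancel_to_of q) at 2. destruct (of_nat q) as [a b]. cbn [fst].
  pose proof (to_nat_non_decreasing a b). lia.
Qed.

Lemma slot_inf (a N : nat) : exists q, (N <= q)%nat /\ fst (of_nat q) = a.
Proof.
  exists (to_nat (a, N)). rewrite cancel_of_to. split; auto.
  pose proof (to_nat_non_decreasing a N). lia.
Qed.

Lemma kind_inf (c : kind) : (forall e, c = KPair e -> e <> 0%Z) ->
  forall N, exists q, (N <= q)%nat /\ kindq q = c.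
Proof.
  intros Hc N. assert (exists a, code a = c) as [a Ha].
  { destruct c. apply code_pair. apply Hc; auto. apply code_bit. }
  destruct (slot_inf a N) as [q [Hq1 Hq2]]. exists q. split; auto. unfold kindq. rewrite Hq2. auto.
Qed.

Lemma kindq_bit q i ty : kindq q = KBit i ty -> (i <= q)%nat.
Proof. intro H. apply code_bit_le in H. pose proof (fst_of_nat_le q). lia. Qed.

Lemma kindq_pair q e : kindq q = KPair e -> e <> 0%Z /\ (Z.abs e <= Z.of_nat q + 1)%Z.
Proof. intro H. apply code_pair_bound in H. pose proof (fst_of_nat_le q). lia. Qed.

Definition PZ (q : nat) : Z := (8 * Z.of_nat q * Z.of_nat q + 8)%Z.

Definition fp (q : nat) (i : Z) : Prop :=
  i = PZ q \/ exists e, kindq q = KPair e /\ i = (PZ q + e)%Z.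

Lemma fp_near q i : fp q i -> (Z.abs (i - PZ q) <= Z.of_nat q + 1)%Z.
Proof.
  intros [->|[e [He ->]]]. lia. apply kindq_pair in He. lia.
Qed.

Lemma fp_sep q1 q2 i1 i2 : (q1 < q2)%nat -> fp q1 i1 -> fp q2 i2 ->
  (i2 - i1 >= 14 * Z.of_nat q1 + 5)%Z.
Proof.
  intros Hq H1 H2. apply fp_near in H1. apply fp_near in H2. unfold PZ in *.
  assert (Z.of_nat q1 + 1 <= Z.of_nat q2)%Z by lia.
  set (a := Z.of_nat q1) in *. set (b := Z.of_nat q2) in *.
  assert (0 <= a)%Z by lia.
  assert (8 * b * b - b >= 8 * (a+1) * (a+1) - (a + 1))%Z by nia.
  lia.
Qed.

Lemma fp_P q : fp q (PZ q).
Proof. left. auto. Qed.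

Lemma fp_unique q1 q2 i : fp q1 i -> fp q2 i -> q1 = q2.
Proof.
  intros H1 H2. destruct (Nat.lt_total q1 q2) as [H|[H|H]]; auto.
  - pose proof (fp_sep _ _ _ _ H H1 H2). lia.
  - pose proof (fp_sep _ _ _ _ H H2 H1). lia.
Qed.

Definition slot_of (i : Z) : option nat :=
  match excluded_middle_informative (exists q, i = PZ q) with
  | left H => Some (proj1_sig (constructive_indefinite_description _ H))
  | right _ => None
  end.

Definition pair2 (i : Z) : bool :=
  match excluded_middle_informative (exists q e, kindq q = KPair e /\ i = (PZ q + e)%Z) with
  | left _ => true | right _ => false end.

Lemma slot_of_P q : slot_of (PZ q) = Some q.
Proof.
  unfold slot_of. destruct (excluded_middle_informative _) as [H|H].
  - destruct (constructive_indefinite_description _ H) as [q' Hq']. simpl. f_equal.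
    apply (fp_unique q' q (PZ q)). left; auto. apply fp_P.
  - exfalso. eauto.
Qed.

Lemma slot_of_Some i q : slot_of i = Some q -> i = PZ q.
Proof.
  unfold slot_of. destruct (excluded_middle_informative _) as [H|H]; try discriminate.
  destruct (constructive_indefinite_description _ H) as [q' Hq']. simpl. congruence.
Qed.

Lemma slot_of_None i : slot_of i = None -> forall q, i <> PZ q.
Proof.
  unfold slot_of. destruct (excluded_middle_informative _) as [H|H]; try discriminate.
  intros _ q E. apply H. eauto.
Qed.

Definition content {A : Type} (Z1 Z2 : list A) (beta : nat -> bool) (q : nat) : list A :=
  match kindq q with
  | KPair _ => Z1
  | KBit b ty => if xorb (beta b) ty then Z2 else Z1
  end.

Definition tailtile {A : Type} (F Z1 Z2 : list A) (beta : nat -> bool) (i : Z) : list A :=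
  match slot_of i with
  | Some q => content Z1 Z2 beta q
  | None => if pair2 i then Z2 else F
  end.

Lemma tt_P {A : Type} (F Z1 Z2 : list A) beta q : tailtile F Z1 Z2 beta (PZ q) = content Z1 Z2 beta q.
Proof. unfold tailtile. rewrite slot_of_P. auto. Qed.

Lemma tt_pair {A : Type} (F Z1 Z2 : list A) beta q e : kindq q = KPair e ->
  tailtile F Z1 Z2 beta (PZ q + e) = Z2.
Proof.
  intro He. unfold tailtile.
  destruct (slot_of (PZ q + e)) eqn:E.
  - exfalso. apply slot_of_Some in E. assert (fp q (PZ q + e)) as H1 by (right; eauto).
    assert (fp n (PZ q + e)) as H2 by (left; auto). pose proof (fp_unique _ _ _ H1 H2). subst n.
    apply kindq_pair in He. lia.
  - unfold pair2. destruct (excluded_middle_informative _) as [H|H]; auto.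
    exfalso. apply H. eauto.
Qed.

Lemma tt_F {A : Type} (F Z1 Z2 : list A) beta i : (forall q, ~ fp q i) -> tailtile F Z1 Z2 beta i = F.
Proof.
  intro H. unfold tailtile. destruct (slot_of i) eqn:E.
  - exfalso. apply slot_of_Some in E. apply (H n). left; auto.
  - unfold pair2. destruct (excluded_middle_informative _) as [[q [e [H1 H2]]]|H']; auto.
    exfalso. apply (H q). right. eauto.
Qed.

Lemma tt_dep {A : Type} (F Z1 Z2 : list A) beta beta' i :
  (forall b, (Z.of_nat b <= i)%Z -> beta b = beta' b) ->
  tailtile F Z1 Z2 beta i = tailtile F Z1 Z2 beta' i.
Proof.
  intros H. unfold tailtile. destruct (slot_of i) eqn:E; auto.
  apply slot_of_Some in E. unfold content. destruct (kindq n) eqn:K; auto.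
  apply kindq_bit in K. rewrite H; auto. unfold PZ in E. nia.
Qed.


Record gdata (A : Type) := mkG { gk : nat; gF : list A; gZ1 : list A; gZ2 : list A; ga0 : A }.
Record pdata (A : Type) := mkP { pM0 : nat; pm : nat; pT : list A }.
Arguments gk {A}. Arguments gF {A}. Arguments gZ1 {A}. Arguments gZ2 {A}. Arguments ga0 {A}.
Arguments pM0 {A}. Arguments pm {A}. Arguments pT {A}.

Definition gok {A} (G : gdata A) : Prop :=
  (1 <= gk G)%nat /\ length (gF G) = gk G /\ length (gZ1 G) = gk G /\ length (gZ2 G) = gk G.
Definition pok {A} (G : gdata A) (P : pdata A) : Prop := length (pT P) = (pm P * gk G)%nat.

Definition ttile {A} (G : gdata A) beta t := tailtile (gF G) (gZ1 G) (gZ2 G) beta t.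

Definition gpt {A} (G : gdata A) (P : pdata A) (beta : nat -> bool) (i : Z) : A :=
  let kz := Z.of_nat (gk G) in
  let t := (i / kz)%Z in let r := Z.to_nat (i mod kz) in
  if (t <? - Z.of_nat (pM0 P))%Z then nth r (gF G) (ga0 G)
  else if (t <? Z.of_nat (pm P) - Z.of_nat (pM0 P))%Z then nth (Z.to_nat (i + Z.of_nat (pM0 P) * kz)) (pT P) (ga0 G)
  else nth r (ttile G beta t) (ga0 G).

Lemma divmod_tk (k : Z) t r : (0 <= r < k)%Z -> ((t * k + r) / k = t /\ (t * k + r) mod k = r)%Z.
Proof.
  intro H. split.
  - rewrite Z.add_comm, Z.div_add by lia. rewrite Z.div_small by lia. lia.
  - rewrite Z.add_comm, Z.mod_add by lia. apply Z.mod_small. lia.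
Qed.

Lemma tlen {A} (G : gdata A) beta t : gok G -> length (ttile G beta t) = gk G.
Proof.
  intros [_ [H1 [H2 H3]]]. unfold ttile, tailtile, content.
  destruct (slot_of t); [destruct (kindq n); [|destruct (xorb _ _)]|destruct (pair2 t)]; auto.
Qed.

Lemma gpt_tail {A} (G : gdata A) P beta t r : gok G ->
  (Z.of_nat (pm P) - Z.of_nat (pM0 P) <= t)%Z -> (0 <= r < Z.of_nat (gk G))%Z ->
  gpt G P beta (t * Z.of_nat (gk G) + r) = nth (Z.to_nat r) (ttile G beta t) (ga0 G).
Proof.
  intros HG Ht Hr. unfold gpt. destruct (divmod_tk (Z.of_nat (gk G)) t r Hr) as [E1 E2].
  rewrite E1, E2. destruct (Z.ltb_spec t (- Z.of_nat (pM0 P))); try lia.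
  destruct (Z.ltb_spec t (Z.of_nat (pm P) - Z.of_nat (pM0 P))); try lia. auto.
Qed.

Lemma gpt_left {A} (G : gdata A) P beta t r : gok G ->
  (t < - Z.of_nat (pM0 P))%Z -> (0 <= r < Z.of_nat (gk G))%Z ->
  gpt G P beta (t * Z.of_nat (gk G) + r) = nth (Z.to_nat r) (gF G) (ga0 G).
Proof.
  intros HG Ht Hr. unfold gpt. destruct (divmod_tk (Z.of_nat (gk G)) t r Hr) as [E1 E2].
  rewrite E1, E2. destruct (Z.ltb_spec t (- Z.of_nat (pM0 P))); try lia. auto.
Qed.

Lemma gpt_mid {A} (G : gdata A) P beta p : gok G -> pok G P -> (0 <= p < Z.of_nat (pm P * gk G))%Z ->
  gpt G P beta (p - Z.of_nat (pM0 P) * Z.of_nat (gk G)) = nth (Z.to_nat p) (pT P) (ga0 G).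
Proof.
  intros HG HP Hp. unfold gpt. set (k := Z.of_nat (gk G)). assert (1 <= k)%Z by (unfold k; destruct HG; lia).
  assert ((p - Z.of_nat (pM0 P) * k) / k = p / k - Z.of_nat (pM0 P))%Z as E.
  { replace (p - Z.of_nat (pM0 P) * k)%Z with (p + (- Z.of_nat (pM0 P)) * k)%Z by lia.
    rewrite Z.div_add by lia. lia. }
  rewrite E. assert (0 <= p / k)%Z by (apply Z.div_pos; lia).
  assert (p / k < Z.of_nat (pm P))%Z.
  { apply Z.div_lt_upper_bound. lia. rewrite Nat2Z.inj_mul in Hp. fold k in Hp. lia. }
  destruct (Z.ltb_spec (p / k - Z.of_nat (pM0 P)) (- Z.of_nat (pM0 P))); try lia.
  destruct (Z.ltb_spec (p / k - Z.of_nat (pM0 P)) (Z.of_nat (pm P) - Z.of_nat (pM0 P))); try lia.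
  f_equal. lia.
Qed.

Lemma nth_error_nth' {A} (l : list A) j d : (j < length l)%nat -> nth_error l j = Some (nth j l d).
Proof. intro H. apply nth_error_nth'. auto. Qed.

Lemma wsegZ_tail {A} (G : gdata A) P beta t : gok G ->
  (Z.of_nat (pm P) - Z.of_nat (pM0 P) <= t)%Z ->
  wsegZ (gpt G P beta) (t * Z.of_nat (gk G)) (gk G) = ttile G beta t.
Proof.
  intros HG Ht. apply nth_error_ext. intro j. rewrite wsegZ_nth.
  destruct (Nat.ltb_spec j (gk G)).
  - rewrite gpt_tail; auto; try lia. rewrite Nat2Z.id. symmetry. apply nth_error_nth'. rewrite tlen; auto.
  - symmetry. apply nth_error_None. rewrite tlen; auto.
Qed.

Lemma wsegZ_left {A} (G : gdata A) P beta t : gok G -> (t < - Z.of_nat (pM0 P))%Z ->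
  wsegZ (gpt G P beta) (t * Z.of_nat (gk G)) (gk G) = gF G.
Proof.
  intros HG Ht. pose proof HG as [_ [HF _]]. apply nth_error_ext. intro j. rewrite wsegZ_nth.
  destruct (Nat.ltb_spec j (gk G)).
  - rewrite gpt_left; auto; try lia. rewrite Nat2Z.id. symmetry. apply nth_error_nth'. lia.
  - symmetry. apply nth_error_None. lia.
Qed.

Lemma wsegZ_mid {A} (G : gdata A) P beta : gok G -> pok G P ->
  wsegZ (gpt G P beta) (- Z.of_nat (pM0 P) * Z.of_nat (gk G)) (pm P * gk G) = pT P.
Proof.
  intros HG HP. apply nth_error_ext. intro j. rewrite wsegZ_nth.
  destruct (Nat.ltb_spec j (pm P * gk G)).
  - replace (- Z.of_nat (pM0 P) * Z.of_nat (gk G) + Z.of_nat j)%Z with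
      (Z.of_nat j - Z.of_nat (pM0 P) * Z.of_nat (gk G))%Z by lia.
    rewrite gpt_mid; auto; try lia. rewrite Nat2Z.id. symmetry. apply nth_error_nth'. unfold pok in HP. lia.
  - symmetry. apply nth_error_None. unfold pok in HP. lia.
Qed.

Lemma wsegZ_split {A} (g : Z -> A) a l1 l2 :
  wsegZ g a (l1 + l2) = wsegZ g a l1 ++ wsegZ g (a + Z.of_nat l1) l2.
Proof.
  apply nth_error_ext. intro j. rewrite wsegZ_nth.
  destruct (Nat.lt_ge_cases j l1).
  - rewrite nth_error_app1 by (rewrite wsegZ_length; auto). rewrite wsegZ_nth.
    destruct (Nat.ltb_spec j (l1 + l2)); destruct (Nat.ltb_spec j l1); try lia. auto.
  - rewrite nth_error_app2 by (rewrite wsegZ_length; auto). rewrite wsegZ_nth, wsegZ_length.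
    destruct (Nat.ltb_spec j (l1 + l2)); destruct (Nat.ltb_spec (j - l1) l2); try lia; auto.
    f_equal. f_equal. lia.
Qed.

Definition goodt {A} (L : list A -> Prop) (s t : list A) : Prop := exists v, t = s ++ v /\ L (t ++ s).

Lemma grow {A} (L : list A -> Prop) s g a len l2 : sync_word L s ->
  L (wsegZ g a len ++ s) -> goodt L s (wsegZ g (a + Z.of_nat len) l2) -> L (wsegZ g a (len + l2) ++ s).
Proof.
  intros [_ [_ Hs]] H1 [v [E H2]]. rewrite wsegZ_split, E. rewrite E in H2.
  rewrite <- !app_assoc. apply Hs; auto. rewrite <- app_assoc in H2. auto.
Qed.

Definition tiles_good {A} (L : list A -> Prop) s (G : gdata A) : Prop :=
  goodt L s (gF G) /\ goodt L s (gZ1 G) /\ goodt L s (gZ2 G).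

Lemma ttile_good {A} L s (G : gdata A) beta t : tiles_good L s G -> goodt L s (ttile G beta t).
Proof.
  intros [H1 [H2 H3]]. unfold ttile, tailtile, content.
  destruct (slot_of t); [destruct (kindq n); [|destruct (xorb _ _)]|destruct (pair2 t)]; auto.
Qed.

Lemma tails_ok {A} (L : list A -> Prop) s (G : gdata A) P beta a len :
  sync_word L s -> gok G -> tiles_good L s G ->
  (a + Z.of_nat len = (Z.of_nat (pm P) - Z.of_nat (pM0 P)) * Z.of_nat (gk G))%Z ->
  L (wsegZ (gpt G P beta) a len ++ s) ->
  forall n, L (wsegZ (gpt G P beta) a (len + n * gk G) ++ s).
Proof.
  intros Hs HG HT Ha H0 n. induction n.
  - rewrite Nat.add_0_r. auto.
  - replace (len + S n * gk G)%nat with ((len + n * gk G) + gk G)%nat by lia.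
    apply grow; auto.
    replace (a + Z.of_nat (len + n * gk G))%Z with
      ((Z.of_nat (pm P) - Z.of_nat (pM0 P) + Z.of_nat n) * Z.of_nat (gk G))%Z by lia.
    rewrite wsegZ_tail; auto; try lia. apply ttile_good; auto.
Qed.

Lemma left_ok {A} (L : list A -> Prop) s (G : gdata A) P beta R :
  sync_word L s -> gok G -> tiles_good L s G ->
  L (wsegZ (gpt G P beta) (- Z.of_nat (pM0 P + R + 1) * Z.of_nat (gk G)) ((R + 1) * gk G) ++ s).
Proof.
  intros Hs HG HT. pose proof HT as [[v [Ev HF]] _].
  assert (forall j, (j <= R)%nat ->
    L (wsegZ (gpt G P beta) (- Z.of_nat (pM0 P + R + 1) * Z.of_nat (gk G)) ((j + 1) * gk G) ++ s)) as H.
  { induction j; intro Hj.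
    - simpl. rewrite Nat.add_0_r. rewrite wsegZ_left; auto. lia.
    - replace ((S j + 1) * gk G)%nat with ((j + 1) * gk G + gk G)%nat by lia.
      apply grow; auto. apply IHj; lia.
      replace (- Z.of_nat (pM0 P + R + 1) * Z.of_nat (gk G) + Z.of_nat ((j + 1) * gk G))%Z with
        ((- Z.of_nat (pM0 P + R + 1) + Z.of_nat (j + 1)) * Z.of_nat (gk G))%Z by lia.
      rewrite wsegZ_left; auto; try lia. exists v. split; auto. }
  apply H. lia.
Qed.

Lemma mid_ok {A} (L : list A -> Prop) s (G : gdata A) P beta R :
  sync_word L s -> gok G -> pok G P -> tiles_good L s G -> goodt L s (pT P) ->
  L (wsegZ (gpt G P beta) (- Z.of_nat (pM0 P + R + 1) * Z.of_nat (gk G)) ((R + 1) * gk G + pm P * gk G) ++ s).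
Proof.
  intros Hs HG HP HT HTT. apply grow; auto. apply left_ok; auto.
  replace (- Z.of_nat (pM0 P + R + 1) * Z.of_nat (gk G) + Z.of_nat ((R + 1) * gk G))%Z with
    (- Z.of_nat (pM0 P) * Z.of_nat (gk G))%Z by lia.
  rewrite wsegZ_mid; auto.
Qed.


Definition Tstart {A} (P : pdata A) : Z := (Z.of_nat (pm P) - Z.of_nat (pM0 P))%Z.

Lemma PZ_ge q : (Z.of_nat q + 8 <= PZ q)%Z.
Proof. unfold PZ. nia. Qed.

Lemma distinct_tiles {A} (G : gdata A) (P1 P2 : pdata A) b1 b2 (j1 j2 : nat) (N : Z) :
  (j1 <> j2 \/ exists i, b1 i <> b2 i) ->
  exists t, (N <= t)%Z /\ ttile G b1 (t + Z.of_nat j1) = gZ1 G /\ ttile G b2 (t + Z.of_nat j2) = gZ2 G /\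
     (Tstart P1 <= t + Z.of_nat j1)%Z /\ (Tstart P2 <= t + Z.of_nat j2)%Z.
Proof.
  intros Hd.
  set (Nq := (Z.to_nat (Z.abs N + Z.abs (Tstart P1) + Z.abs (Tstart P2)) + j1 + j2 + 1)%nat).
  destruct (Nat.eq_dec j1 j2) as [Ej|Nj].
  - destruct Hd as [Hd|[i Hi]]; [contradiction|]. subst j2.
    destruct (kind_inf (KBit i (b1 i)) ltac:(intros e He; discriminate) Nq) as [q [Hq Kq]].
    exists (PZ q - Z.of_nat j1)%Z. pose proof (PZ_ge q).
    replace (PZ q - Z.of_nat j1 + Z.of_nat j1)%Z with (PZ q) by lia.
    unfold ttile. rewrite !tt_P. unfold content. rewrite Kq.
    rewrite xorb_nilpotent. destruct (b1 i) eqn:E1, (b2 i) eqn:E2; try congruence; simpl;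
    (split; [lia|split; [auto|split; [auto|split; lia]]]).
  - set (e := (Z.of_nat j2 - Z.of_nat j1)%Z).
    destruct (kind_inf (KPair e) ltac:(intros e' He'; inversion He'; unfold e; lia) Nq) as [q [Hq Kq]].
    exists (PZ q - Z.of_nat j1)%Z. pose proof (PZ_ge q). pose proof (kindq_pair _ _ Kq) as [_ Hb].
    replace (PZ q - Z.of_nat j1 + Z.of_nat j1)%Z with (PZ q) by lia.
    replace (PZ q - Z.of_nat j1 + Z.of_nat j2)%Z with (PZ q + e)%Z by (unfold e; lia).
    unfold ttile. rewrite tt_P, (tt_pair _ _ _ _ _ _ Kq). unfold content. rewrite Kq.
    unfold e in *. split; [lia|split; [auto|split; [auto|split; lia]]].
Qed.

Lemma gpt_tile {A} (G : gdata A) (P : pdata A) beta t r : gok G -> (Tstart P <= t)%Z -> (0 <= r < Z.of_nat (gk G))%Z ->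
  gpt G P beta (t * Z.of_nat (gk G) + r) = nth (Z.to_nat r) (ttile G beta t) (ga0 G).
Proof. intros. apply gpt_tail; auto. Qed.

Lemma gpt_dep {A} (G : gdata A) P b1 b2 i :
  (forall b, (Z.of_nat b <= i / Z.of_nat (gk G))%Z -> b1 b = b2 b) -> gpt G P b1 i = gpt G P b2 i.
Proof.
  intro H. unfold gpt. destruct (_ <? _)%Z; auto. destruct (_ <? _)%Z; auto.
  unfold ttile. rewrite (tt_dep _ _ _ b1 b2); auto.
Qed.

Definition Zdiff {A} (G : gdata A) : Prop :=
  exists r0, (r0 < gk G)%nat /\ nth r0 (gZ1 G) (ga0 G) <> nth r0 (gZ2 G) (ga0 G).

Lemma bit_detect {A} (G : gdata A) (P : pdata A) (j : nat) (b : nat) : gok G -> Zdiff G ->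
  exists t : nat, forall b1 b2,
    (forall r, (0 <= r < Z.of_nat (gk G))%Z ->
       gpt G P b1 ((Z.of_nat t + Z.of_nat j) * Z.of_nat (gk G) + r) =
       gpt G P b2 ((Z.of_nat t + Z.of_nat j) * Z.of_nat (gk G) + r)) -> b1 b = b2 b.
Proof.
  intros HG [r0 [Hr0 Hd]].
  destruct (kind_inf (KBit b false) ltac:(intros e He; discriminate) (Z.to_nat (Z.abs (Tstart P)) + j)) as [q [Hq Kq]].
  pose proof (PZ_ge q).
  exists (Z.to_nat (PZ q - Z.of_nat j)). intros b1 b2 HH.
  specialize (HH (Z.of_nat r0) ltac:(lia)).
  replace (Z.of_nat (Z.to_nat (PZ q - Z.of_nat j)) + Z.of_nat j)%Z with (PZ q) in HH by lia.
  rewrite !gpt_tile in HH; auto; try lia. unfold ttile in HH. rewrite !tt_P in HH. unfold content in HH.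
  rewrite Kq in HH. rewrite !xorb_false_r in HH. rewrite Nat2Z.id in HH.
  destruct (b1 b), (b2 b); auto; exfalso; apply Hd; auto.
Qed.


Lemma cand3 (a p1 p2 R : Z) : (0 <= R)%Z ->
  exists c, (a <= c <= a + 2 * (2 * R + 1))%Z /\ (Z.abs (c - p1) > R)%Z /\ (Z.abs (c - p2) > R)%Z.
Proof.
  intro HR.
  assert ((Z.abs (a - p1) > R /\ Z.abs (a - p2) > R) \/ (Z.abs (a + (2*R+1) - p1) > R /\ Z.abs (a + (2*R+1) - p2) > R) \/ (Z.abs (a + 2*(2*R+1) - p1) > R /\ Z.abs (a + 2*(2*R+1) - p2) > R))%Z as H by lia.
  destruct H as [[? ?]|[[? ?]|[? ?]]]; eexists; (split; [|split; eauto]); lia.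
Qed.

Definition fbound (R : Z) : Z := (R + PZ (Z.to_nat (6 * R + 2)) + Z.of_nat (Z.to_nat (6 * R + 2)) + 1)%Z.

Lemma PZ_mono q1 q2 : (q1 < q2)%nat -> (PZ q1 + Z.of_nat q1 < PZ q2 + Z.of_nat q2)%Z.
Proof. intro H. unfold PZ. assert (Z.of_nat q1 + 1 <= Z.of_nat q2)%Z by lia. nia. Qed.

Lemma free_cand (R a : Z) : (0 <= R)%Z -> (fbound R <= a)%Z ->
  exists c, (a <= c <= a + 2 * (2 * R + 1))%Z /\ forall u q, (Z.abs (u - c) <= R)%Z -> ~ fp q u.
Proof.
  intros HR Ha.
  set (Dn := Z.to_nat (6 * R + 2)).
  assert (Hbig : forall q u, fp q u -> (a - R <= u)%Z -> (Dn <= q)%nat).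
  { intros q u Hf Hu. apply fp_near in Hf. destruct (Nat.lt_ge_cases q Dn) as [Hl|]; auto.
    pose proof (PZ_mono _ _ Hl). unfold fbound in Ha. fold Dn in Ha. lia. }
  destruct (classic (exists q u, fp q u /\ (a - R <= u <= a + 2 * (2 * R + 1) + R)%Z)) as [[q0 [u0 [H0 Hu0]]]|Hno].
  - assert (Huniq : forall q u, fp q u -> (a - R <= u <= a + 2 * (2 * R + 1) + R)%Z -> q = q0).
    { intros q u Hf Hu. destruct (Nat.lt_total q q0) as [Hl|[He|Hl]]; auto; exfalso.
      - pose proof (fp_sep _ _ _ _ Hl Hf H0). pose proof (Hbig q u Hf ltac:(lia)). lia.
      - pose proof (fp_sep _ _ _ _ Hl H0 Hf). pose proof (Hbig q0 u0 H0 ltac:(lia)). lia. }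
    destruct (kindq q0) as [e|i ty] eqn:K.
    + destruct (cand3 a (PZ q0) (PZ q0 + e) R HR) as [c [Hc1 [Hc2 Hc3]]].
      exists c. split; auto. intros u q Hu Hf.
      pose proof (Huniq q u Hf ltac:(lia)). subst q.
      destruct Hf as [->|[e' [K' ->]]]. lia. rewrite K in K'. inversion K'. subst. lia.
    + destruct (cand3 a (PZ q0) (PZ q0) R HR) as [c [Hc1 [Hc2 Hc3]]].
      exists c. split; auto. intros u q Hu Hf.
      pose proof (Huniq q u Hf ltac:(lia)). subst q.
      destruct Hf as [->|[e' [K' ->]]]. lia. rewrite K in K'. discriminate.
  - exists a. split. lia. intros u q Hu Hf. apply Hno. exists q, u. split; auto. lia.
Qed.

Lemma synd_core {A} (G : gdata A) (P1 P2 : pdata A) b1 b2 (j1 j2 : nat) (W : nat) (B : nat -> Prop) :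
  gok G -> thick B ->
  exists n, B n /\ forall i : Z, (Z.abs i <= Z.of_nat W)%Z ->
    gpt G P1 b1 (Z.of_nat n + i + Z.of_nat j1 * Z.of_nat (gk G)) =
    gpt G P2 b2 (Z.of_nat n + i + Z.of_nat j2 * Z.of_nat (gk G)).
Proof.
  intros HG HB. set (k := Z.of_nat (gk G)). assert (Hk : (1 <= k)%Z) by (unfold k; destruct HG; lia).
  set (R := (Z.of_nat W + Z.of_nat j1 + Z.of_nat j2)%Z).
  set (A0 := (fbound R + Z.abs (Tstart P1) + Z.abs (Tstart P2) + R)%Z).
  set (Len := Z.to_nat ((A0 + 2 * (2 * R + 1) + 2) * k)).
  destruct (HB Len) as [m0 Hm0].
  set (a := (A0 + Z.of_nat m0 / k + 1)%Z).
  assert (0 <= Z.of_nat m0 / k)%Z by (apply Z.div_pos; lia).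
  assert (0 <= fbound R)%Z by (unfold fbound, PZ; lia).
  destruct (free_cand R a ltac:(lia) ltac:(unfold a, A0; lia)) as [c [Hc Hfree]].
  assert (Z.of_nat m0 < (Z.of_nat m0 / k + 1) * k)%Z.
  { pose proof (Z.mul_div_le (Z.of_nat m0) k ltac:(lia)). pose proof (Z.mod_pos_bound (Z.of_nat m0) k ltac:(lia)).
    pose proof (Z.div_mod (Z.of_nat m0) k ltac:(lia)). nia. }
  assert (Z.of_nat m0 <= c * k)%Z by nia.
  assert (c * k < Z.of_nat m0 + Z.of_nat Len)%Z.
  { unfold Len. rewrite Z2Nat.id by nia. pose proof (Z.mul_div_le (Z.of_nat m0) k ltac:(lia)). nia. }
  exists (Z.to_nat (c * k)). split.
  - replace (Z.to_nat (c * k)) with (m0 + (Z.to_nat (c * k) - m0))%nat by lia. apply Hm0. lia.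
  - intros i Hi. rewrite Z2Nat.id by nia.
    pose proof (Z.div_mod i k ltac:(lia)) as Ei. pose proof (Z.mod_pos_bound i k ltac:(lia)) as Hr.
    set (d := (i / k)%Z) in *. set (r := (i mod k)%Z) in *.
    assert (Z.abs d <= Z.of_nat W)%Z.
    { assert (k * d <= i)%Z by lia. assert (i < k * d + k)%Z by lia. nia. }
    replace (c * k + i + Z.of_nat j1 * k)%Z with ((c + d + Z.of_nat j1) * k + r)%Z by lia.
    replace (c * k + i + Z.of_nat j2 * k)%Z with ((c + d + Z.of_nat j2) * k + r)%Z by lia.
    unfold k. rewrite !gpt_tile; auto; try (unfold k in *; lia).
    unfold ttile. rewrite !tt_F; auto.
    + intros q. apply Hfree. lia.
    + intros q. apply Hfree. lia.
Qed.


Definition beta (c : nat) (p : nat -> bool) (i : nat) : bool :=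
  if (i <? c)%nat then true else if (i =? c)%nat then false else p (i - c - 1)%nat.

Lemma beta_inj c1 c2 p1 p2 : (forall i, beta c1 p1 i = beta c2 p2 i) -> c1 = c2 /\ p1 = p2.
Proof.
  intro H. assert (c1 = c2).
  { destruct (Nat.lt_total c1 c2) as [Hl|[He|Hl]]; auto; exfalso.
    - specialize (H c1). unfold beta in H. rewrite Nat.ltb_irrefl, Nat.eqb_refl in H.
      destruct (Nat.ltb_spec c1 c2); try lia; discriminate.
    - specialize (H c2). unfold beta in H. rewrite Nat.ltb_irrefl, Nat.eqb_refl in H.
      destruct (Nat.ltb_spec c2 c1); try lia; discriminate. }
  subst c2. split; auto. apply functional_extensionality. intro i.
  specialize (H (c1 + 1 + i)%nat). unfold beta in H.
  destruct (Nat.ltb_spec (c1 + 1 + i) c1); try lia. destruct (Nat.eqb_spec (c1 + 1 + i) c1); try lia.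
  replace (c1 + 1 + i - c1 - 1)%nat with i in H by lia. auto.
Qed.

Lemma beta_bit c p i : beta c p (c + 1 + i) = p i.
Proof.
  unfold beta. destruct (Nat.ltb_spec (c + 1 + i) c); try lia. destruct (Nat.eqb_spec (c + 1 + i) c); try lia.
  replace (c + 1 + i - c - 1)%nat with i by lia. auto.
Qed.

Lemma beta_agree c p q N : (forall i, (i < N)%nat -> p i = q i) ->
  forall b, (b < c + 1 + N)%nat -> beta c p b = beta c q b.
Proof.
  intros H b Hb. unfold beta. destruct (Nat.ltb_spec b c); auto. destruct (b =? c)%nat eqn:E; auto.
  apply Nat.eqb_neq in E. apply H. lia.
Qed.

Lemma beta_diff c1 c2 p1 p2 : (c1, p1) <> (c2, p2) -> exists i, beta c1 p1 i <> beta c2 p2 i.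
Proof.
  intro H. apply NNPP. intro Hn. apply H.
  assert (forall i, beta c1 p1 i = beta c2 p2 i).
  { intro i. apply NNPP. intro Hi. apply Hn. eauto. }
  apply beta_inj in H0 as [-> ->]. auto.
Qed.

Definition h1 {A} (G : gdata A) (Pc : nat -> pdata A) (c j : nat) (p : nat -> bool) : nat -> A :=
  fun n => gpt G (Pc c) (beta c p) (Z.of_nat n + Z.of_nat j * Z.of_nat (gk G))%Z.

Lemma legal1 {A} (X : (nat -> A) -> Prop) s (G : gdata A) (P : pdata A) b :
  subshift1 X -> sync_word (lang1 X) s -> gok G -> tiles_good (lang1 X) s G ->
  pok G P -> pM0 P = 0%nat -> lang1 X (pT P ++ s) ->
  X (fun n => gpt G P b (Z.of_nat n)).
Proof.
  intros HX Hs HG HT HP HM HL. apply closed1_pts; auto. intro m.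
  assert (lang1 X (wsegZ (gpt G P b) 0 (pm P * gk G) ++ s)) as H0.
  { pose proof (wsegZ_mid G P b HG HP) as E. rewrite HM in E. simpl in E. rewrite E. auto. }
  pose proof (tails_ok (lang1 X) s G P b 0 (pm P * gk G) Hs HG HT ltac:(rewrite HM; lia) H0 m) as H1.
  apply (lang1_factor X [] _ s) in H1.
  destruct (lang1_point X _ HX H1) as [y [Hy Hocc]]. exists y. split; auto.
  intros i Hi. symmetry. apply (Hocc i). rewrite wsegZ_nth. destruct HG as [Hk _].
  destruct (Nat.ltb_spec i (pm P * gk G + m * gk G)); try nia. auto.
Qed.

Lemma h1_iter {A} (G : gdata A) Pc c j p n :
  Nat.iter n shift1 (h1 G Pc c j p) = fun i => gpt G (Pc c) (beta c p) (Z.of_nat (n + i) + Z.of_nat j * Z.of_nat (gk G))%Z.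
Proof. rewrite iter_shift1. reflexivity. Qed.

Lemma h1_shift {A} (G : gdata A) Pc c j p :
  Nat.iter (gk G) shift1 (h1 G Pc c j p) = h1 G Pc c (S j) p.
Proof.
  rewrite h1_iter. unfold h1. apply functional_extensionality. intro i. f_equal. lia.
Qed.

Lemma h1_X {A} (X : (nat -> A) -> Prop) s (G : gdata A) Pc c j p :
  subshift1 X -> sync_word (lang1 X) s -> gok G -> tiles_good (lang1 X) s G ->
  pok G (Pc c) -> pM0 (Pc c) = 0%nat -> lang1 X (pT (Pc c) ++ s) ->
  X (h1 G Pc c j p).
Proof.
  intros. assert (h1 G Pc c j p = Nat.iter (j * gk G) shift1 (fun n => gpt G (Pc c) (beta c p) (Z.of_nat n))) as ->.
  { rewrite iter_shift1. unfold h1. apply functional_extensionality. intro i. f_equal. lia. }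
  apply subshift1_iter; auto. apply legal1 with s; auto.
Qed.

Lemma key1 {A} (G : gdata A) Pc c1 j1 p1 c2 j2 p2 : gok G ->
  (j1 <> j2 \/ (c1, p1) <> (c2, p2)) -> forall N : nat, exists t : nat, (N <= t)%nat /\
  forall r, (r < gk G)%nat -> h1 G Pc c1 j1 p1 (t * gk G + r) = nth r (gZ1 G) (ga0 G) /\
                              h1 G Pc c2 j2 p2 (t * gk G + r) = nth r (gZ2 G) (ga0 G).
Proof.
  intros HG Hd N.
  destruct (distinct_tiles G (Pc c1) (Pc c2) (beta c1 p1) (beta c2 p2) j1 j2 (Z.of_nat N))
    as [t [Ht [E1 [E2 [T1 T2]]]]].
  { destruct Hd; auto. right. apply beta_diff; auto. }
  exists (Z.to_nat t). split. lia. intros r Hr. unfold h1.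
  replace (Z.of_nat (Z.to_nat t * gk G + r) + Z.of_nat j1 * Z.of_nat (gk G))%Z with
    ((t + Z.of_nat j1) * Z.of_nat (gk G) + Z.of_nat r)%Z by (rewrite Nat2Z.inj_add, Nat2Z.inj_mul, Z2Nat.id by lia; lia).
  replace (Z.of_nat (Z.to_nat t * gk G + r) + Z.of_nat j2 * Z.of_nat (gk G))%Z with
    ((t + Z.of_nat j2) * Z.of_nat (gk G) + Z.of_nat r)%Z by (rewrite Nat2Z.inj_add, Nat2Z.inj_mul, Z2Nat.id by lia; lia).
  rewrite !gpt_tile; auto; try lia. rewrite E1, E2, Nat2Z.id. auto.
Qed.

Lemma h1_inj {A} (G : gdata A) Pc c j p q : gok G -> Zdiff G -> h1 G Pc c j p = h1 G Pc c j q -> p = q.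
Proof.
  intros HG [r0 [Hr0 Hd]] E. apply NNPP. intro Hpq.
  destruct (key1 G Pc c j p c j q HG ltac:(right; congruence) 0) as [t [_ Ht]].
  destruct (Ht r0 Hr0) as [E1 E2]. apply Hd. rewrite <- E1, <- E2, E. auto.
Qed.

Lemma h1_cont {A} (G : gdata A) Pc c j p (e : R) : gok G -> (e > 0)%R ->
  exists N, forall q, agree_cantor N p q -> (dist1 (h1 G Pc c j p) (h1 G Pc c j q) < e)%R.
Proof.
  intros HG He. destruct (half_pow_small e He) as [W HW].
  exists (W + j + 1)%nat. intros q Hq.
  assert (dist1 (h1 G Pc c j p) (h1 G Pc c j q) <= (/2)^W)%R; [|lra].
  apply dist1_le. intros n Hn. unfold h1. apply gpt_dep. intros b Hb.
  apply beta_agree with (W + j + 1)%nat. intros i Hi. apply Hq. auto.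
  destruct HG as [Hk _].
  assert ((Z.of_nat n + Z.of_nat j * Z.of_nat (gk G)) / Z.of_nat (gk G) <= Z.of_nat n + Z.of_nat j)%Z.
  { rewrite Z.div_add by lia. assert (Z.of_nat n / Z.of_nat (gk G) <= Z.of_nat n)%Z.
    apply Z.div_le_upper_bound; nia. lia. }
  lia.
Qed.

Lemma h1_icont {A} (G : gdata A) Pc c j p N : gok G -> Zdiff G ->
  exists e, (e > 0)%R /\ forall q, (dist1 (h1 G Pc c j p) (h1 G Pc c j q) < e)%R -> agree_cantor N p q.
Proof.
  intros HG HZ. induction N.
  - exists 1%R. split. lra. intros q _ i Hi. lia.
  - destruct IHN as [e1 [He1 H1]].
    destruct (bit_detect G (Pc c) j (c + 1 + N) HG HZ) as [t Ht].
    exists (Rmin e1 ((/2)^((t + 1) * gk G))). split.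
    { apply Rmin_glb_lt; auto. apply half_pow_pos. }
    intros q Hq i Hi. destruct (Nat.lt_ge_cases i N).
    + apply H1; auto. eapply Rlt_le_trans; eauto. apply Rmin_l.
    + assert (i = N) by lia. subst i.
      rewrite <- (beta_bit c p N), <- (beta_bit c q N). apply Ht.
      intros r Hr. assert (Hd : (dist1 (h1 G Pc c j p) (h1 G Pc c j q) < (/2)^((t + 1) * gk G))%R).
      { eapply Rlt_le_trans; eauto. apply Rmin_r. }
      pose proof (dist1_lt _ _ _ Hd (t * gk G + Z.to_nat r)%nat ltac:(nia)) as E.
      unfold h1 in E.
      replace (Z.of_nat (t * gk G + Z.to_nat r) + Z.of_nat j * Z.of_nat (gk G))%Z with
        ((Z.of_nat t + Z.of_nat j) * Z.of_nat (gk G) + r)%Z in E by lia. auto.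
Qed.

Lemma main1 {A} (X : (nat -> A) -> Prop) s (G : gdata A) (Pc : nat -> pdata A) (z z' : nat -> A)
  (o K : nat) (delta : R) :
  subshift1 X -> sync_word (lang1 X) s -> gok G -> Zdiff G -> tiles_good (lang1 X) s G ->
  (forall c, pok G (Pc c) /\ pM0 (Pc c) = 0%nat /\ lang1 X (pT (Pc c) ++ s)) ->
  (forall u, lang1 X u -> exists c, occw u (pT (Pc c)) 0) ->
  (forall r, (r < K)%nat -> nth (o + r) (gZ1 G) (ga0 G) = z r) ->
  (forall r, (r < K)%nat -> nth (o + r) (gZ2 G) (ga0 G) = z' r) ->
  (o + K <= gk G)%nat -> ((/2)^K < delta)%R ->
     exists S : (nat -> A) -> Prop,
       dense_in dist1 X S /\ mycielski dist1 S /\ synd_scrambled dist1 shift1 S /\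
       (exists k : nat, (1 <= k)%nat /\ forall x, S x -> S (Nat.iter k shift1 x)) /\
       (forall x x', S x -> S x' -> x <> x' ->
          exists M : nat -> Prop, infinite_nat M /\
            forall n, M n -> (dist1 z (Nat.iter n shift1 x) < delta)%R /\
                             (dist1 z' (Nat.iter n shift1 x') < delta)%R).
Proof.
  intros HX Hs HG HZ HT HP Hdense Hz1 Hz2 Hok Hdel.
  pose proof HG as [Hk _].
  exists (fun x => exists c j p, x = h1 G Pc c j p).
  assert (HSX : forall c j p, X (h1 G Pc c j p)).
  { intros c j p. destruct (HP c) as [H1 [H2 H3]]. apply h1_X with s; auto. }
  assert (Hlab : forall c1 j1 p1 c2 j2 p2, h1 G Pc c1 j1 p1 <> h1 G Pc c2 j2 p2 ->
            j1 <> j2 \/ (c1, p1) <> (c2, p2)).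
  { intros c1 j1 p1 c2 j2 p2 Hne. destruct (Nat.eq_dec j1 j2); auto. right. intro E.
    inversion E. subst. auto. }
  split; [|split; [|split; [|split]]].
  -
    split. intros x [c [j [p ->]]]. auto.
    intros x Hx e He. destruct (half_pow_small e He) as [W HW].
    destruct (Hdense (wseg1 x 0 W) (lang1_wseg X x 0 W Hx)) as [c Hc].
    exists (h1 G Pc c 0 (fun _ => false)). split. eauto.
    assert (dist1 x (h1 G Pc c 0 (fun _ => false)) <= (/2)^W)%R; [|lra].
    apply dist1_le. intros i Hi. destruct (HP c) as [HP1 [HP2 HP3]].
    assert (nth_error (pT (Pc c)) i = Some (x i)) as E.
    { apply (Hc i (x i)). rewrite wseg1_nth. destruct (Nat.ltb_spec i W); try lia. auto. }
    assert (i < length (pT (Pc c)))%nat by (apply nth_error_Some; congruence).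
    unfold h1. pose proof (gpt_mid G (Pc c) (beta c (fun _ => false)) (Z.of_nat i) HG HP1) as Em.
    rewrite HP2 in Em. unfold pok in HP1.
    replace (Z.of_nat i + Z.of_nat 0 * Z.of_nat (gk G))%Z with (Z.of_nat i - Z.of_nat 0 * Z.of_nat (gk G))%Z by lia.
    rewrite Em by lia. rewrite Nat2Z.id. symmetry. apply nth_error_nth. auto.
  -
    exists (fun n x => exists p, x = h1 G Pc (fst (of_nat n)) (snd (of_nat n)) p). split.
    + intro n. exists (h1 G Pc (fst (of_nat n)) (snd (of_nat n))). split; [|split; [|split]].
      * intros p q E. eapply h1_inj; eauto.
      * intro x. split; intros [p Hp]; exists p; auto.
      * intros p e He. apply h1_cont; auto.
      * intros p N. apply h1_icont; auto.
    + intro x. split.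
      * intros [c [j [p ->]]]. exists (to_nat (c, j)). rewrite cancel_of_to. simpl. eauto.
      * intros [n [p ->]]. eauto.
  -
    split.
    + exists (h1 G Pc 0 0 (fun _ => false)), (h1 G Pc 0 0 (fun _ => true)). split; [eauto|split; [eauto|]].
      intro E. apply h1_inj in E; auto. apply (f_equal (fun f => f 0%nat)) in E. discriminate.
    + intros x y [c1 [j1 [p1 ->]]] [c2 [j2 [p2 ->]]] Hne. specialize (Hlab _ _ _ _ _ _ Hne). split.
      * intros e He B HB. destruct (half_pow_small e He) as [W HW].
        destruct (synd_core G (Pc c1) (Pc c2) (beta c1 p1) (beta c2 p2) j1 j2 W B HG HB) as [n [Hn Ha]].
        exists n. split; auto.
        assert (dist1 (Nat.iter n shift1 (h1 G Pc c1 j1 p1)) (Nat.iter n shift1 (h1 G Pc c2 j2 p2)) <= (/2)^W)%R; [|lra].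
        apply dist1_le. intros i Hi. rewrite !h1_iter. rewrite Nat2Z.inj_add. apply Ha. lia.
      * intro Has. destruct HZ as [r0 [Hr0 Hd]].
        destruct (Has ((/2)^(gk G))%R (half_pow_pos _)) as [N HN].
        destruct (key1 G Pc c1 j1 p1 c2 j2 p2 HG Hlab N) as [t [Ht Htt]].
        specialize (HN (t * gk G)%nat ltac:(nia)).
        pose proof (dist1_lt _ _ _ HN r0 ltac:(lia)) as E. rewrite !iter_shift1 in E.
        destruct (Htt r0 Hr0) as [E1 E2]. apply Hd. rewrite <- E1, <- E2. auto.
  - exists (gk G). split; auto. intros x [c [j [p ->]]]. exists c, (S j), p. apply h1_shift.
  - intros x y [c1 [j1 [p1 ->]]] [c2 [j2 [p2 ->]]] Hne. specialize (Hlab _ _ _ _ _ _ Hne).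
    exists (fun n => exists t, n = (t * gk G + o)%nat /\ forall r, (r < gk G)%nat ->
       h1 G Pc c1 j1 p1 (t * gk G + r) = nth r (gZ1 G) (ga0 G) /\
       h1 G Pc c2 j2 p2 (t * gk G + r) = nth r (gZ2 G) (ga0 G)). split.
    + intro N. destruct (key1 G Pc c1 j1 p1 c2 j2 p2 HG Hlab N) as [t [Ht Htt]].
      exists (t * gk G + o)%nat. split. nia. eauto.
    + intros n [t [-> Htt]]. split.
      * assert (dist1 z (Nat.iter (t * gk G + o) shift1 (h1 G Pc c1 j1 p1)) <= (/2)^K)%R; [|lra].
        apply dist1_le. intros i Hi. rewrite iter_shift1. rewrite <- Hz1 by auto.
        rewrite <- Nat.add_assoc. symmetry. apply Htt. lia.
      * assert (dist1 z' (Nat.iter (t * gk G + o) shift1 (h1 G Pc c2 j2 p2)) <= (/2)^K)%R; [|lra].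
        apply dist1_le. intros i Hi. rewrite iter_shift1. rewrite <- Hz2 by auto.
        rewrite <- Nat.add_assoc. symmetry. apply Htt. lia.
Qed.


Fixpoint allw {A} (l : list A) (n : nat) : list (list A) :=
  match n with
  | O => [[]]
  | S n => flat_map (fun w => map (fun a => a :: w) l) (allw l n)
  end.

Lemma allw_in {A} (l : list A) : (forall a, In a l) -> forall w, In w (allw l (length w)).
Proof.
  intros Hl w. induction w; simpl; auto. apply in_flat_map. exists w. split; auto.
  apply in_map_iff. exists a. auto.
Qed.

Definition wd {A} (l : list A) (c : nat) : list A := nth (snd (of_nat c)) (allw l (fst (of_nat c))) [].

Lemma wd_surj {A} (l : list A) : (forall a, In a l) -> forall w, exists c, wd l c = w.
Proof.
  intros Hl w. destruct (In_nth _ _ [] (allw_in l Hl w)) as [r [_ Hr]].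
  exists (to_nat (length w, r)). unfold wd. rewrite cancel_of_to. auto.
Qed.

Lemma occw_prefix {A} (u T : list A) : occw u T 0 -> T = u ++ skipn (length u) T.
Proof.
  intro H. rewrite <- (firstn_skipn (length u) T) at 1. f_equal.
  apply nth_error_ext. intro j. destruct (Nat.lt_ge_cases j (length u)).
  - rewrite nth_error_firstn_lt by auto. destruct (nth_error u j) eqn:E.
    + apply H in E. auto.
    + apply nth_error_None in E. lia.
  - rewrite (proj2 (nth_error_None u j)) by lia. apply nth_error_None. rewrite length_firstn. lia.
Qed.

Lemma occw_nth_eq {A} (w T : list A) o j d : occw w T o -> (j < length w)%nat -> nth (o + j) T d = nth j w d.
Proof.
  intros H Hj. apply nth_error_nth. apply H. apply nth_error_nth'. auto.
Qed.

Lemma choice_nat {A} (Pp : nat -> A -> Prop) : (forall c, exists a, Pp c a) -> exists f, forall c, Pp c (f c).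
Proof.
  intro H. exists (fun c => proj1_sig (constructive_indefinite_description _ (H c))).
  intro c. exact (proj2_sig (constructive_indefinite_description _ (H c))).
Qed.

Lemma fun_diff {A} (z z' : nat -> A) : z <> z' -> exists d, z d <> z' d.
Proof.
  intro H. apply NNPP. intro Hn. apply H. apply functional_extensionality. intro d.
  apply NNPP. intro Hd. apply Hn. eauto.
Qed.

Theorem one_sided :
  (forall (A : Type) (X : (nat -> A) -> Prop) (z z' : nat -> A) (delta : R),
     finite_type A -> synchronizing1 X -> mixing dist1 shift1 X ->
     X z -> X z' -> z <> z' -> (delta > 0)%R ->
     exists S : (nat -> A) -> Prop,
       dense_in dist1 X S /\ mycielski dist1 S /\ synd_scrambled dist1 shift1 S /\
       (exists k : nat, (1 <= k)%nat /\ forall x, S x -> S (Nat.iter k shift1 x)) /\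
       (forall x x', S x -> S x' -> x <> x' ->
          exists M : nat -> Prop, infinite_nat M /\
            forall n, M n -> (dist1 z (Nat.iter n shift1 x) < delta)%R /\
                             (dist1 z' (Nat.iter n shift1 x') < delta)%R)).
Proof.
  intros A X z z' delta [l Hl] [HS [_ [s Hs]]] Hmix Hz Hz' Hne Hdel.
  set (L := lang1 X).
  assert (Hf : factor_closed L) by apply lang1_factor.
  assert (Hm : mixL L) by (apply mix1; auto).
  pose proof Hs as [Hsne [HLs _]].
  destruct (fun_diff z z' Hne) as [d0 Hd0].
  destruct (half_pow_small delta Hdel) as [K0 HK0].
  set (K := (K0 + d0 + 1)%nat).
  assert (HK : ((/2)^K < delta)%R) by (pose proof (half_pow_le K0 K ltac:(lia)); lra).
  set (wz := wseg1 z 0 K). set (wz' := wseg1 z' 0 K).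
  assert (Lwz : L wz) by (apply lang1_wseg; auto).
  assert (Lwz' : L wz') by (apply lang1_wseg; auto).
  destruct (tile_exists L s s wz Hf Hm HLs HLs Lwz) as [No1 HNo1].
  destruct (tile_exists L s s wz' Hf Hm HLs HLs Lwz') as [No2 HNo2].
  destruct (tile_exists L s s s Hf Hm HLs HLs HLs) as [No3 HNo3].
  set (o := (No1 + No2 + No3)%nat).
  destruct (HNo1 o ltac:(lia)) as [Nk1 HNk1].
  destruct (HNo2 o ltac:(lia)) as [Nk2 HNk2].
  destruct (HNo3 o ltac:(lia)) as [Nk3 HNk3].
  set (k := (Nk1 + Nk2 + Nk3 + length s + o + K + 1)%nat).
  destruct (HNk1 k ltac:(lia)) as [T1 [HT1l [HT1s [HT1w HT1L]]]].
  destruct (HNk2 k ltac:(lia)) as [T2 [HT2l [HT2s [HT2w HT2L]]]].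
  destruct (HNk3 k ltac:(lia)) as [T3 [HT3l [HT3s [HT3w HT3L]]]].
  set (G := mkG A k T3 T1 T2 (z 0%nat)).
  assert (HG : gok G) by (unfold gok; simpl; lia).
  assert (Hwzl : length wz = K) by apply wseg1_length.
  assert (Hwzl' : length wz' = K) by apply wseg1_length.
  assert (Hz1 : forall r, (r < K)%nat -> nth (o + r) (gZ1 G) (ga0 G) = z r).
  { intros r Hr. simpl. rewrite occw_nth_eq with (w := wz) by (auto; lia).
    apply nth_error_nth. unfold wz. rewrite wseg1_nth. destruct (Nat.ltb_spec r K); try lia. auto. }
  assert (Hz2 : forall r, (r < K)%nat -> nth (o + r) (gZ2 G) (ga0 G) = z' r).
  { intros r Hr. simpl. rewrite occw_nth_eq with (w := wz') by (auto; lia).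
    apply nth_error_nth. unfold wz'. rewrite wseg1_nth. destruct (Nat.ltb_spec r K); try lia. auto. }
  assert (HZd : Zdiff G).
  { exists (o + d0)%nat. split. simpl. lia. rewrite Hz1, Hz2 by lia. auto. }
  assert (HTg : tiles_good L s G).
  { unfold tiles_good; simpl. repeat split.
    - exists (skipn (length s) T3). split; auto. apply occw_prefix; auto.
    - exists (skipn (length s) T1). split; auto. apply occw_prefix; auto.
    - exists (skipn (length s) T2). split; auto. apply occw_prefix; auto. }
  set (uc := fun c => match excluded_middle_informative (L (wd l c)) with left _ => wd l c | right _ => s end).
  assert (Huc : forall c, L (uc c)).
  { intro c. unfold uc. destruct (excluded_middle_informative _); auto. }
  assert (HPex : forall c, exists P : pdata A, pok G P /\ pM0 P = 0%nat /\ L (pT P ++ s) /\ occw (uc c) (pT P) 0).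
  { intro c. destruct (tile_exists L s (uc c) s Hf Hm HLs (Huc c) HLs) as [No HNo].
    destruct (HNo No (le_n _)) as [Nk HNk].
    destruct (HNk ((Nk + 1) * k)%nat ltac:(nia)) as [T [HTl [HTu [_ HTL]]]].
    exists (mkP A 0 (Nk + 1) T). unfold pok. simpl. auto. }
  destruct (choice_nat _ HPex) as [Pc HPc].
  apply (main1 X s G Pc z z' o K delta); auto.
  - intro c. destruct (HPc c) as [? [? [? ?]]]. auto.
  - intros u Hu. destruct (wd_surj l Hl u) as [c Hc]. exists c.
    destruct (HPc c) as [_ [_ [_ H]]]. unfold uc in H. rewrite Hc in H.
    destruct (excluded_middle_informative _); auto. contradiction.
  - simpl. lia.
Qed.


Definition h2 {A} (G : gdata A) (Pc : nat -> pdata A) (c j : nat) (p : nat -> bool) : Z -> A :=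
  fun i => gpt G (Pc c) (beta c p) (i + Z.of_nat j * Z.of_nat (gk G))%Z.

Lemma legal2 {A} (X : (Z -> A) -> Prop) s (G : gdata A) (P : pdata A) b :
  subshift2 X -> sync_word (lang2 X) s -> gok G -> tiles_good (lang2 X) s G ->
  pok G P -> goodt (lang2 X) s (pT P) -> X (gpt G P b).
Proof.
  intros HX Hs HG HT HP HPg. apply closed2_pts; auto. intro m.
  set (a := (- Z.of_nat (pM0 P + m + 1) * Z.of_nat (gk G))%Z).
  pose proof (mid_ok (lang2 X) s G P b m Hs HG HP HT HPg) as H0.
  pose proof (tails_ok (lang2 X) s G P b a ((m + 1) * gk G + pm P * gk G) Hs HG HT
     ltac:(unfold a; lia) H0 (m + pM0 P)) as H1.
  apply (lang2_factor X [] _ s) in H1.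
  destruct (lang2_point X _ a HX H1) as [y [Hy Hocc]]. exists y. split; auto.
  intros i Hi. destruct HG as [Hk _].
  assert (0 <= i - a)%Z by (unfold a; nia).
  replace i with (a + Z.of_nat (Z.to_nat (i - a)))%Z by lia. symmetry. apply Hocc.
  rewrite wsegZ_nth. destruct (Nat.ltb_spec (Z.to_nat (i - a)) ((m + 1) * gk G + pm P * gk G + (m + pM0 P) * gk G)); auto.
  unfold a in *. nia.
Qed.

Lemma h2_iter {A} (G : gdata A) Pc c j p n :
  Nat.iter n shift2 (h2 G Pc c j p) = fun i => gpt G (Pc c) (beta c p) (i + Z.of_nat n + Z.of_nat j * Z.of_nat (gk G))%Z.
Proof. rewrite iter_shift2. reflexivity. Qed.

Lemma h2_shift {A} (G : gdata A) Pc c j p :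
  Nat.iter (gk G) shift2 (h2 G Pc c j p) = h2 G Pc c (S j) p.
Proof.
  rewrite h2_iter. unfold h2. apply functional_extensionality. intro i. f_equal. lia.
Qed.

Lemma h2_X {A} (X : (Z -> A) -> Prop) s (G : gdata A) Pc c j p :
  subshift2 X -> sync_word (lang2 X) s -> gok G -> tiles_good (lang2 X) s G ->
  pok G (Pc c) -> goodt (lang2 X) s (pT (Pc c)) -> X (h2 G Pc c j p).
Proof.
  intros. unfold h2. apply (subshift2_transl X (gpt G (Pc c) (beta c p))); auto.
  apply legal2 with s; auto.
Qed.

Lemma key2 {A} (G : gdata A) Pc c1 j1 p1 c2 j2 p2 : gok G ->
  (j1 <> j2 \/ (c1, p1) <> (c2, p2)) -> forall N : nat, exists t : nat, (N <= t)%nat /\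
  forall r, (0 <= r < Z.of_nat (gk G))%Z ->
     h2 G Pc c1 j1 p1 (Z.of_nat t * Z.of_nat (gk G) + r) = nth (Z.to_nat r) (gZ1 G) (ga0 G) /\
     h2 G Pc c2 j2 p2 (Z.of_nat t * Z.of_nat (gk G) + r) = nth (Z.to_nat r) (gZ2 G) (ga0 G).
Proof.
  intros HG Hd N.
  destruct (distinct_tiles G (Pc c1) (Pc c2) (beta c1 p1) (beta c2 p2) j1 j2 (Z.of_nat N))
    as [t [Ht [E1 [E2 [T1 T2]]]]].
  { destruct Hd; auto. right. apply beta_diff; auto. }
  exists (Z.to_nat t). split. lia. intros r Hr. unfold h2.
  rewrite Z2Nat.id by lia.
  replace (t * Z.of_nat (gk G) + r + Z.of_nat j1 * Z.of_nat (gk G))%Z with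
    ((t + Z.of_nat j1) * Z.of_nat (gk G) + r)%Z by lia.
  replace (t * Z.of_nat (gk G) + r + Z.of_nat j2 * Z.of_nat (gk G))%Z with
    ((t + Z.of_nat j2) * Z.of_nat (gk G) + r)%Z by lia.
  rewrite !gpt_tile; auto; try lia. rewrite E1, E2. auto.
Qed.

Lemma h2_inj {A} (G : gdata A) Pc c j p q : gok G -> Zdiff G -> h2 G Pc c j p = h2 G Pc c j q -> p = q.
Proof.
  intros HG [r0 [Hr0 Hd]] E. apply NNPP. intro Hpq.
  destruct (key2 G Pc c j p c j q HG ltac:(right; congruence) 0) as [t [_ Ht]].
  destruct (Ht (Z.of_nat r0) ltac:(lia)) as [E1 E2]. rewrite Nat2Z.id in E1, E2.
  apply Hd. rewrite <- E1, <- E2, E. auto.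
Qed.

Lemma h2_cont {A} (G : gdata A) Pc c j p (e : R) : gok G -> (e > 0)%R ->
  exists N, forall q, agree_cantor N p q -> (dist2 (h2 G Pc c j p) (h2 G Pc c j q) < e)%R.
Proof.
  intros HG He. destruct (half_pow_small e He) as [W HW].
  exists (W + j + 1)%nat. intros q Hq.
  assert (dist2 (h2 G Pc c j p) (h2 G Pc c j q) <= (/2)^W)%R; [|lra].
  apply dist2_le. intros i Hi. unfold h2. apply gpt_dep. intros b Hb.
  apply beta_agree with (W + j + 1)%nat. intros i' Hi'. apply Hq. auto.
  destruct HG as [Hk _].
  assert ((i + Z.of_nat j * Z.of_nat (gk G)) / Z.of_nat (gk G) <= Z.abs i + Z.of_nat j)%Z.
  { rewrite Z.div_add by lia. assert (i / Z.of_nat (gk G) <= Z.abs i)%Z.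
    apply Z.div_le_upper_bound; nia. lia. }
  lia.
Qed.

Lemma h2_icont {A} (G : gdata A) Pc c j p N : gok G -> Zdiff G ->
  exists e, (e > 0)%R /\ forall q, (dist2 (h2 G Pc c j p) (h2 G Pc c j q) < e)%R -> agree_cantor N p q.
Proof.
  intros HG HZ. induction N.
  - exists 1%R. split. lra. intros q _ i Hi. lia.
  - destruct IHN as [e1 [He1 H1]].
    destruct (bit_detect G (Pc c) j (c + 1 + N) HG HZ) as [t Ht].
    exists (Rmin e1 ((/2)^((t + 1) * gk G))). split.
    { apply Rmin_glb_lt; auto. apply half_pow_pos. }
    intros q Hq i Hi. destruct (Nat.lt_ge_cases i N).
    + apply H1; auto. eapply Rlt_le_trans; eauto. apply Rmin_l.
    + assert (i = N) by lia. subst i.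
      rewrite <- (beta_bit c p N), <- (beta_bit c q N). apply Ht.
      intros r Hr. assert (Hd : (dist2 (h2 G Pc c j p) (h2 G Pc c j q) < (/2)^((t + 1) * gk G))%R).
      { eapply Rlt_le_trans; eauto. apply Rmin_r. }
      pose proof (dist2_lt _ _ _ Hd (Z.of_nat t * Z.of_nat (gk G) + r)%Z ltac:(nia)) as E.
      unfold h2 in E.
      replace (Z.of_nat t * Z.of_nat (gk G) + r + Z.of_nat j * Z.of_nat (gk G))%Z with
        ((Z.of_nat t + Z.of_nat j) * Z.of_nat (gk G) + r)%Z in E by lia. auto.
Qed.

Lemma main2 {A} (X : (Z -> A) -> Prop) s (G : gdata A) (Pc : nat -> pdata A) (z z' : Z -> A)
  (o K : nat) (delta : R) :
  subshift2 X -> sync_word (lang2 X) s -> gok G -> Zdiff G -> tiles_good (lang2 X) s G ->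
  (forall c, pok G (Pc c) /\ goodt (lang2 X) s (pT (Pc c))) ->
  (forall x, X x -> forall W : nat, exists c, forall b i, (Z.abs i <= Z.of_nat W)%Z -> gpt G (Pc c) b i = x i) ->
  (forall r, (Z.abs r < Z.of_nat K)%Z -> nth (Z.to_nat (Z.of_nat o + r)) (gZ1 G) (ga0 G) = z r) ->
  (forall r, (Z.abs r < Z.of_nat K)%Z -> nth (Z.to_nat (Z.of_nat o + r)) (gZ2 G) (ga0 G) = z' r) ->
  (K <= o)%nat -> (o + K <= gk G)%nat -> ((/2)^K < delta)%R ->
     exists S : (Z -> A) -> Prop,
       dense_in dist2 X S /\ mycielski dist2 S /\ synd_scrambled dist2 shift2 S /\
       (exists k : nat, (1 <= k)%nat /\ forall x, S x -> S (Nat.iter k shift2 x)) /\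
       (forall x x', S x -> S x' -> x <> x' ->
          exists M : nat -> Prop, infinite_nat M /\
            forall n, M n -> (dist2 z (Nat.iter n shift2 x) < delta)%R /\
                             (dist2 z' (Nat.iter n shift2 x') < delta)%R).
Proof.
  intros HX Hs HG HZ HT HP Hdense Hz1 Hz2 HoK Hok Hdel.
  pose proof HG as [Hk _].
  exists (fun x => exists c j p, x = h2 G Pc c j p).
  assert (HSX : forall c j p, X (h2 G Pc c j p)).
  { intros c j p. destruct (HP c) as [H1 H2]. apply h2_X with s; auto. }
  assert (Hlab : forall c1 j1 p1 c2 j2 p2, h2 G Pc c1 j1 p1 <> h2 G Pc c2 j2 p2 ->
            j1 <> j2 \/ (c1, p1) <> (c2, p2)).
  { intros c1 j1 p1 c2 j2 p2 Hne. destruct (Nat.eq_dec j1 j2); auto. right. intro E.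
    inversion E. subst. auto. }
  split; [|split; [|split; [|split]]].
  -
    split. intros x [c [j [p ->]]]. auto.
    intros x Hx e He. destruct (half_pow_small e He) as [W HW].
    destruct (Hdense x Hx W) as [c Hc].
    exists (h2 G Pc c 0 (fun _ => false)). split. eauto.
    assert (dist2 x (h2 G Pc c 0 (fun _ => false)) <= (/2)^W)%R; [|lra].
    apply dist2_le. intros i Hi. unfold h2. rewrite Hc by lia. f_equal. lia.
  -
    exists (fun n x => exists p, x = h2 G Pc (fst (of_nat n)) (snd (of_nat n)) p). split.
    + intro n. exists (h2 G Pc (fst (of_nat n)) (snd (of_nat n))). split; [|split; [|split]].
      * intros p q E. eapply h2_inj; eauto.
      * intro x. split; intros [p Hp]; exists p; auto.
      * intros p e He. apply h2_cont; auto.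
      * intros p N. apply h2_icont; auto.
    + intro x. split.
      * intros [c [j [p ->]]]. exists (to_nat (c, j)). rewrite cancel_of_to. simpl. eauto.
      * intros [n [p ->]]. eauto.
  -
    split.
    + exists (h2 G Pc 0 0 (fun _ => false)), (h2 G Pc 0 0 (fun _ => true)). split; [eauto|split; [eauto|]].
      intro E. apply h2_inj in E; auto. apply (f_equal (fun f => f 0%nat)) in E. discriminate.
    + intros x y [c1 [j1 [p1 ->]]] [c2 [j2 [p2 ->]]] Hne. specialize (Hlab _ _ _ _ _ _ Hne). split.
      * intros e He B HB. destruct (half_pow_small e He) as [W HW].
        destruct (synd_core G (Pc c1) (Pc c2) (beta c1 p1) (beta c2 p2) j1 j2 W B HG HB) as [n [Hn Ha]].
        exists n. split; auto.
        assert (dist2 (Nat.iter n shift2 (h2 G Pc c1 j1 p1)) (Nat.iter n shift2 (h2 G Pc c2 j2 p2)) <= (/2)^W)%R; [|lra].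
        apply dist2_le. intros i Hi. rewrite !h2_iter.
        replace (i + Z.of_nat n)%Z with (Z.of_nat n + i)%Z by lia. apply Ha. lia.
      * intro Has. destruct HZ as [r0 [Hr0 Hd]].
        destruct (Has ((/2)^(gk G))%R (half_pow_pos _)) as [N HN].
        destruct (key2 G Pc c1 j1 p1 c2 j2 p2 HG Hlab N) as [t [Ht Htt]].
        specialize (HN (t * gk G)%nat ltac:(nia)).
        pose proof (dist2_lt _ _ _ HN (Z.of_nat r0) ltac:(lia)) as E. rewrite !iter_shift2 in E.
        destruct (Htt (Z.of_nat r0) ltac:(lia)) as [E1 E2]. rewrite Nat2Z.id in E1, E2.
        apply Hd. rewrite <- E1, <- E2. rewrite Nat2Z.inj_mul in E.
        replace (Z.of_nat t * Z.of_nat (gk G) + Z.of_nat r0)%Z with (Z.of_nat r0 + Z.of_nat t * Z.of_nat (gk G))%Z by lia.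
        auto.
  - exists (gk G). split; auto. intros x [c [j [p ->]]]. exists c, (S j), p. apply h2_shift.
  - intros x y [c1 [j1 [p1 ->]]] [c2 [j2 [p2 ->]]] Hne. specialize (Hlab _ _ _ _ _ _ Hne).
    exists (fun n => exists t, n = (t * gk G + o)%nat /\ forall r, (0 <= r < Z.of_nat (gk G))%Z ->
       h2 G Pc c1 j1 p1 (Z.of_nat t * Z.of_nat (gk G) + r) = nth (Z.to_nat r) (gZ1 G) (ga0 G) /\
       h2 G Pc c2 j2 p2 (Z.of_nat t * Z.of_nat (gk G) + r) = nth (Z.to_nat r) (gZ2 G) (ga0 G)). split.
    + intro N. destruct (key2 G Pc c1 j1 p1 c2 j2 p2 HG Hlab N) as [t [Ht Htt]].
      exists (t * gk G + o)%nat. split. nia. eauto.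
    + intros n [t [-> Htt]]. split.
      * assert (dist2 z (Nat.iter (t * gk G + o) shift2 (h2 G Pc c1 j1 p1)) <= (/2)^K)%R; [|lra].
        apply dist2_le. intros i Hi. rewrite iter_shift2. rewrite <- Hz1 by auto.
        replace (i + Z.of_nat (t * gk G + o))%Z with (Z.of_nat t * Z.of_nat (gk G) + (Z.of_nat o + i))%Z by lia.
        symmetry. apply Htt. lia.
      * assert (dist2 z' (Nat.iter (t * gk G + o) shift2 (h2 G Pc c2 j2 p2)) <= (/2)^K)%R; [|lra].
        apply dist2_le. intros i Hi. rewrite iter_shift2. rewrite <- Hz2 by auto.
        replace (i + Z.of_nat (t * gk G + o))%Z with (Z.of_nat t * Z.of_nat (gk G) + (Z.of_nat o + i))%Z by lia.
        symmetry. apply Htt. lia.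
Qed.


Lemma fun_diffZ {A} (z z' : Z -> A) : z <> z' -> exists d, z d <> z' d.
Proof.
  intro H. apply NNPP. intro Hn. apply H. apply functional_extensionality. intro d.
  apply NNPP. intro Hd. apply Hn. eauto.
Qed.

Theorem two_sided :
  (forall (A : Type) (X : (Z -> A) -> Prop) (z z' : Z -> A) (delta : R),
     finite_type A -> synchronizing2 X -> mixing dist2 shift2 X ->
     X z -> X z' -> z <> z' -> (delta > 0)%R ->
     exists S : (Z -> A) -> Prop,
       dense_in dist2 X S /\ mycielski dist2 S /\ synd_scrambled dist2 shift2 S /\
       (exists k : nat, (1 <= k)%nat /\ forall x, S x -> S (Nat.iter k shift2 x)) /\
       (forall x x', S x -> S x' -> x <> x' ->
          exists M : nat -> Prop, infinite_nat M /\
            forall n, M n -> (dist2 z (Nat.iter n shift2 x) < delta)%R /\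
                             (dist2 z' (Nat.iter n shift2 x') < delta)%R)).
Proof.
  intros A X z z' delta [l Hl] [HS [_ [s Hs]]] Hmix Hz Hz' Hne Hdel.
  set (L := lang2 X).
  assert (Hf : factor_closed L) by apply lang2_factor.
  assert (Hm : mixL L) by (apply mix2; auto).
  pose proof Hs as [Hsne [HLs _]].
  destruct (fun_diffZ z z' Hne) as [d0 Hd0].
  destruct (half_pow_small delta Hdel) as [K0 HK0].
  set (K := (K0 + Z.to_nat (Z.abs d0) + 1)%nat).
  assert (HK : ((/2)^K < delta)%R) by (pose proof (half_pow_le K0 K ltac:(lia)); lra).
  set (wz := wsegZ z (- (Z.of_nat K - 1)) (2 * K - 1)). set (wz' := wsegZ z' (- (Z.of_nat K - 1)) (2 * K - 1)).
  assert (Lwz : L wz) by (apply lang2_wseg; auto).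
  assert (Lwz' : L wz') by (apply lang2_wseg; auto).
  destruct (tile_exists L s s wz Hf Hm HLs HLs Lwz) as [No1 HNo1].
  destruct (tile_exists L s s wz' Hf Hm HLs HLs Lwz') as [No2 HNo2].
  destruct (tile_exists L s s s Hf Hm HLs HLs HLs) as [No3 HNo3].
  set (o' := (No1 + No2 + No3 + 1)%nat).
  destruct (HNo1 o' ltac:(lia)) as [Nk1 HNk1].
  destruct (HNo2 o' ltac:(lia)) as [Nk2 HNk2].
  destruct (HNo3 o' ltac:(lia)) as [Nk3 HNk3].
  set (k := (Nk1 + Nk2 + Nk3 + length s + o' + 2 * K + 1)%nat).
  destruct (HNk1 k ltac:(lia)) as [T1 [HT1l [HT1s [HT1w HT1L]]]].
  destruct (HNk2 k ltac:(lia)) as [T2 [HT2l [HT2s [HT2w HT2L]]]].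
  destruct (HNk3 k ltac:(lia)) as [T3 [HT3l [HT3s [HT3w HT3L]]]].
  set (a0 := z 0%Z).
  set (G := mkG A k T3 T1 T2 a0).
  assert (HG : gok G) by (unfold gok; simpl; lia).
  assert (Hwzl : length wz = (2 * K - 1)%nat) by apply wsegZ_length.
  assert (Hwzl' : length wz' = (2 * K - 1)%nat) by apply wsegZ_length.
  set (o := (o' + (K - 1))%nat).
  assert (Hz1 : forall r, (Z.abs r < Z.of_nat K)%Z -> nth (Z.to_nat (Z.of_nat o + r)) (gZ1 G) (ga0 G) = z r).
  { intros r Hr. simpl. replace (Z.to_nat (Z.of_nat o + r)) with (o' + Z.to_nat (Z.of_nat K - 1 + r))%nat by lia.
    rewrite occw_nth_eq with (w := wz) by (auto; lia).
    apply nth_error_nth. unfold wz. rewrite wsegZ_nth.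
    destruct (Nat.ltb_spec (Z.to_nat (Z.of_nat K - 1 + r)) (2 * K - 1)); try lia. f_equal. f_equal. lia. }
  assert (Hz2 : forall r, (Z.abs r < Z.of_nat K)%Z -> nth (Z.to_nat (Z.of_nat o + r)) (gZ2 G) (ga0 G) = z' r).
  { intros r Hr. simpl. replace (Z.to_nat (Z.of_nat o + r)) with (o' + Z.to_nat (Z.of_nat K - 1 + r))%nat by lia.
    rewrite occw_nth_eq with (w := wz') by (auto; lia).
    apply nth_error_nth. unfold wz'. rewrite wsegZ_nth.
    destruct (Nat.ltb_spec (Z.to_nat (Z.of_nat K - 1 + r)) (2 * K - 1)); try lia. f_equal. f_equal. lia. }
  assert (HZd : Zdiff G).
  { exists (Z.to_nat (Z.of_nat o + d0)). split. simpl. lia.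
    rewrite Hz1, Hz2 by lia. auto. }
  assert (HTg : tiles_good L s G).
  { unfold tiles_good; simpl. repeat split.
    - exists (skipn (length s) T3). split; auto. apply occw_prefix; auto.
    - exists (skipn (length s) T1). split; auto. apply occw_prefix; auto.
    - exists (skipn (length s) T2). split; auto. apply occw_prefix; auto. }
  set (uc := fun c => match excluded_middle_informative (L (wd l c)) with left _ => wd l c | right _ => s end).
  assert (Huc : forall c, L (uc c)).
  { intro c. unfold uc. destruct (excluded_middle_informative _); auto. }
  assert (HPex : forall c, exists P : pdata A, pok G P /\ goodt L s (pT P) /\
     forall b j, (j < length (uc c))%nat ->
        gpt G P b (Z.of_nat j - Z.of_nat (Nat.div2 (length (uc c))))%Z = nth j (uc c) a0).
  { intro c. destruct (tile_exists L s s (uc c) Hf Hm HLs HLs (Huc c)) as [No HNo].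
    set (h := Nat.div2 (length (uc c))).
    destruct (HNo ((No + h) * k - h)%nat ltac:(nia)) as [Nk HNk].
    destruct (HNk ((Nk + 1) * k)%nat ltac:(nia)) as [T [HTl [HTs [HTu HTL]]]].
    exists (mkP A (No + h) (Nk + 1) T). unfold pok. simpl. split; [auto|split].
    - exists (skipn (length s) T). split; auto. apply occw_prefix; auto.
    - intros b j Hj.
      assert (nth_error T ((No + h) * k - h + j) = Some (nth j (uc c) a0)) as E.
      { apply HTu. apply nth_error_nth'. auto. }
      assert ((No + h) * k - h + j < length T)%nat by (apply nth_error_Some; congruence).
      pose proof (gpt_mid G (mkP A (No + h) (Nk + 1) T) b (Z.of_nat ((No + h) * k - h + j)) HG
        ltac:(unfold pok; simpl; lia) ltac:(simpl; lia)) as Em.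
      simpl in Em. rewrite Nat2Z.id in Em.
      replace (Z.of_nat j - Z.of_nat h)%Z with
        (Z.of_nat ((No + h) * k - h + j) - Z.of_nat (No + h) * Z.of_nat k)%Z by nia.
      rewrite Em. apply nth_error_nth. auto. }
  destruct (choice_nat _ HPex) as [Pc HPc].
  apply (main2 X s G Pc z z' o K delta); auto.
  - intro c. destruct (HPc c) as [? [? ?]]. auto.
  - intros x Hx W. set (u := wsegZ x (- Z.of_nat W) (2 * W + 1)).
    assert (Lu : L u) by (apply lang2_wseg; auto).
    destruct (wd_surj l Hl u) as [c Hc]. exists c.
    destruct (HPc c) as [_ [_ H]]. unfold uc in H. rewrite Hc in H.
    destruct (excluded_middle_informative _); [|contradiction].
    intros b i Hi. assert (length u = 2 * W + 1)%nat by apply wsegZ_length.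
    rewrite H0 in H. replace (2 * W + 1)%nat with (2 * W + 1)%nat in H by lia.
    rewrite Nat.div2_odd' in H.
    specialize (H b (Z.to_nat (i + Z.of_nat W)) ltac:(lia)).
    replace (Z.of_nat (Z.to_nat (i + Z.of_nat W)) - Z.of_nat W)%Z with i in H by lia.
    rewrite H. apply nth_error_nth. unfold u. rewrite wsegZ_nth.
    destruct (Nat.ltb_spec (Z.to_nat (i + Z.of_nat W)) (2 * W + 1)); try lia. f_equal. f_equal. lia.
  - lia.
  - simpl. lia.
Qed.


Theorem theorem4p10 :
  (* one-sided case *)
  (forall (A : Type) (X : (nat -> A) -> Prop) (z z' : nat -> A) (delta : R),
     finite_type A -> synchronizing1 X -> mixing dist1 shift1 X ->
     X z -> X z' -> z <> z' -> delta > 0 ->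
     exists S : (nat -> A) -> Prop,
       dense_in dist1 X S /\ mycielski dist1 S /\ synd_scrambled dist1 shift1 S /\
       (exists k : nat, (1 <= k)%nat /\ forall x, S x -> S (Nat.iter k shift1 x)) /\
       (forall x x', S x -> S x' -> x <> x' ->
          exists M : nat -> Prop, infinite_nat M /\
            forall n, M n -> dist1 z (Nat.iter n shift1 x) < delta /\
                             dist1 z' (Nat.iter n shift1 x') < delta)) /\
  (* two-sided case *)
  (forall (A : Type) (X : (Z -> A) -> Prop) (z z' : Z -> A) (delta : R),
     finite_type A -> synchronizing2 X -> mixing dist2 shift2 X ->
     X z -> X z' -> z <> z' -> delta > 0 ->
     exists S : (Z -> A) -> Prop,
       dense_in dist2 X S /\ mycielski dist2 S /\ synd_scrambled dist2 shift2 S /\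
       (exists k : nat, (1 <= k)%nat /\ forall x, S x -> S (Nat.iter k shift2 x)) /\
       (forall x x', S x -> S x' -> x <> x' ->
          exists M : nat -> Prop, infinite_nat M /\
            forall n, M n -> dist2 z (Nat.iter n shift2 x) < delta /\
                             dist2 z' (Nat.iter n shift2 x') < delta)).
Proof.
  split.
  - exact one_sided.
  - exact two_sided.
Qed.
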